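(* Let $s>0$, $x_0>0$, and let $P:[0,\infty)\to\mathbb{R}$ be a $\mathcal{C}^2$ increasing function with $P(0)=0$, $P(x)>0$ for $x>0$, satisfying $\int_{x_0}^{\infty}P(z)z^{-1-2/s}\,dz<\infty$. Consider the equation \[ \frac{d\gamma_1}{dx}=\frac{\gamma_1(x)+\gamma_1(x)^2-P(x)}{s\,x\,\gamma_1(x)},\qquad \gamma_1(x_0)=\gamma_0>0, \] and let $\gamma_1^{\star}$ be the separatrix (defined in the context). Then every global solution with $\gamma_1(x_0)>\gamma_1^{\star}(x_0)$ satisfies $C_1x^{1/s}\le\gamma_1(x)\le C_2x^{1/s}$ for all sufficiently large $x$, for some constants $0<C_1<C_2$, while the separatrix satisfies, for some $C>0$ and all $x\ge x_0$, \[ \gamma_c(x)<\gamma_1^{\star}(x)\le\min\Big(\lim_{y\to\infty}\gamma_c(y),\;C\,x^{1/s}\Big), \] where $\gamma_c(x)=\frac{\sqrt{1+4P(x)}-1}{2}$. In particular, if $\lim_{x\to\infty}P(x)<\infty$, the separatrix is the only bounded global solution.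
   Context: Solutions are taken in the region $x>0$, $\gamma_1>0$; a solution is global if it can be continued, remaining strictly positive, to all $x\ge x_0$. Under the stated hypotheses there is a unique value $\gamma_1^{\star}(x_0)>0$ such that the solution with initial value $\gamma_1(x_0)$ is global if and only if $\gamma_1(x_0)\ge\gamma_1^{\star}(x_0)$; the separatrix $\gamma_1^{\star}(x)$ is the solution with initial value $\gamma_1^{\star}(x_0)$ (the smallest global solution). *)

(* Defs.v *)
From Stdlib Require Import Reals.
From Coquelicot Require Import Coquelicot.
Open Scope R_scope.

Definition C2_on_R (Q : R -> R) : Prop :=
  forall x, ex_derive Q x /\ ex_derive (Derive Q) x /\ continuous (Derive_n Q 2) x.

(* P is C^2 on [0,oo): it agrees on [0,oo) with a C^2 function on R
   (equivalent to having one-sided derivatives up to order 2 at 0, continuous). *)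
Definition C2_on_nonneg (P : R -> R) : Prop :=
  exists Q : R -> R, C2_on_R Q /\ forall x, 0 <= x -> Q x = P x.

Definition rhs (s : R) (P : R -> R) (x g : R) : R :=
  (g + g ^ 2 - P x) / (s * x * g).

Definition global_solution (s : R) (P : R -> R) (x0 : R) (g : R -> R) : Prop :=
  (forall x, x0 <= x -> 0 < g x) /\
  filterlim g (at_right x0) (locally (g x0)) /\
  (forall x, x0 < x -> is_derive g x (rhs s P x (g x))).

Definition gamma_c (P : R -> R) (x : R) : R := (sqrt (1 + 4 * P x) - 1) / 2.

(* Main.v *)
Require Import Defs.
From Stdlib Require Import Reals.
From Coquelicot Require Import Coquelicot.
From Stdlib Require Import Lra Lia Factorial Classical.
Open Scope R_scope.

Lemma rc_ball (f : R -> R) a (e : R) : 0 < e ->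
  filterlim f (at_right a) (locally (f a)) ->
  exists d, 0 < d /\ forall u, a < u < a + d -> Rabs (f u - f a) < e.
Proof.
  intros He Hf.
  apply filterlim_locally with (eps := mkposreal e He) in Hf.
  destruct Hf as [d Hd].
  exists d; split; [apply cond_pos|].
  intros u Hu. apply (Hd u).
  - unfold ball; simpl; unfold AbsRing_ball, abs, minus, plus, opp; simpl.
    rewrite Rabs_right; lra.
  - lra.
Qed.

Lemma rc_of_eps (f : R -> R) a :
  (forall e, 0 < e -> exists d, 0 < d /\ forall u, a < u < a + d -> Rabs (f u - f a) < e) ->
  filterlim f (at_right a) (locally (f a)).
Proof.
  intros H. apply filterlim_locally. intros eps.
  destruct (H eps (cond_pos eps)) as [d [Hd Hdd]].
  exists (mkposreal d Hd). intros y Hy Hay.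
  unfold ball in Hy; simpl in Hy; unfold AbsRing_ball, abs, minus, plus, opp in Hy; simpl in Hy.
  unfold ball; simpl; unfold AbsRing_ball, abs, minus, plus, opp; simpl.
  apply Hdd. apply Rabs_def2 in Hy. lra.
Qed.

Lemma der_ctp (f : R -> R) x l : is_derive f x l -> continuity_pt f x.
Proof.
  intros Hd. apply is_derive_Reals in Hd.
  apply derivable_continuous_pt. exists l. exact Hd.
Qed.

Lemma der_cont (f : R -> R) x l : is_derive f x l ->
  forall e, 0 < e -> exists d, 0 < d /\ forall u, Rabs (u - x) < d -> Rabs (f u - f x) < e.
Proof.
  intros Hd e He.
  apply der_ctp in Hd. apply continuity_pt_locally with (eps := mkposreal e He) in Hd.
  destruct Hd as [d Hd'].
  exists d; split; [apply cond_pos|].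
  intros u Hu. apply (Hd' u). exact Hu.
Qed.

Lemma der_rc (f : R -> R) x l : is_derive f x l ->
  filterlim f (at_right x) (locally (f x)).
Proof.
  intros Hd. apply (filterlim_filter_le_1 (F := locally x)).
  - apply filter_le_within.
  - apply continuity_pt_filterlim. apply der_ctp with l; exact Hd.
Qed.

Lemma mono_core (f df : R -> R) a b : a < b ->
  filterlim f (at_right a) (locally (f a)) ->
  (forall x, a < x <= b -> is_derive f x (df x)) ->
  (forall x, a < x <= b -> 0 <= df x) -> f a <= f b.
Proof.
  intros Hab Hrc Hd Hpos.
  assert (H1 : forall a', a < a' < b -> f a' <= f b).
  { intros a' Ha'.
    destruct (MVT_gen f a' b df) as [c [Hc Heq]].
    - intros x Hx. rewrite Rmin_left in Hx by lra. rewrite Rmax_right in Hx by lra.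
      apply Hd; lra.
    - intros x Hx. rewrite Rmin_left in Hx by lra. rewrite Rmax_right in Hx by lra.
      apply der_ctp with (df x). apply Hd; lra.
    - rewrite Rmin_left in Hc by lra. rewrite Rmax_right in Hc by lra.
      assert (0 <= df c) by (apply Hpos; lra).
      assert (0 <= df c * (b - a')) by (apply Rmult_le_pos; lra). lra. }
  destruct (Rle_or_lt (f a) (f b)) as [H|H]; [exact H|].
  destruct (rc_ball f a (f a - f b)) as [d [Hd0 Hdd]]; [lra|exact Hrc|].
  set (u := a + Rmin d (b - a) / 2).
  assert (Hmin : 0 < Rmin d (b - a)) by (apply Rmin_glb_lt; lra).
  assert (Hm1 : Rmin d (b-a) <= d) by apply Rmin_l.
  assert (Hm2 : Rmin d (b-a) <= b - a) by apply Rmin_r.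
  specialize (Hdd u). specialize (H1 u).
  assert (Hu1 : a < u < a + d) by (unfold u; lra).
  assert (Hu2 : a < u < b) by (unfold u; lra).
  specialize (Hdd Hu1). specialize (H1 Hu2).
  apply Rabs_def2 in Hdd. lra.
Qed.

Lemma mono_core_dec (f df : R -> R) a b : a < b ->
  filterlim f (at_right a) (locally (f a)) ->
  (forall x, a < x <= b -> is_derive f x (df x)) ->
  (forall x, a < x <= b -> df x <= 0) -> f b <= f a.
Proof.
  intros Hab Hrc Hd Hneg.
  assert (H := mono_core (fun x => - f x) (fun x => - df x) a b Hab).
  assert (- f a <= - f b); [|lra].
  apply H.
  - apply (rc_of_eps (fun x => - f x)). intros e He. destruct (rc_ball f a e He Hrc) as [d [Hd0 Hdd]].
    exists d; split; [exact Hd0|]. intros u Hu. specialize (Hdd u Hu).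
    replace (- f u - - f a) with (-(f u - f a)) by ring. rewrite Rabs_Ropp; exact Hdd.
  - intros x Hx. apply (is_derive_opp f). apply Hd; exact Hx.
  - intros x Hx. specialize (Hneg x Hx). lra.
Qed.

Lemma cont_ind (Q : R -> Prop) (a b : R) : a <= b -> Q a ->
  (forall t, a <= t < b -> (forall u, a <= u <= t -> Q u) ->
     exists d, 0 < d /\ forall u, t < u < t + d -> u <= b -> Q u) ->
  (forall t, a < t <= b -> (forall u, a <= u < t -> Q u) -> Q t) ->
  forall u, a <= u <= b -> Q u.
Proof.
  intros Hab Qa Hext Hcl.
  set (E := fun x => a <= x <= b /\ forall u, a <= u <= x -> Q u).
  assert (HbE : bound E) by (exists b; intros x [Hx _]; lra).
  assert (HnE : exists x, E x).
  { exists a. split; [lra|]. intros u Hu. replace u with a by lra. exact Qa. }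
  destruct (completeness E HbE HnE) as [m [Hub Hlub]].
  assert (Ham : a <= m) by (apply Hub; destruct HnE; unfold E; split; [lra|];
    intros u Hu; replace u with a by lra; exact Qa).
  assert (Hmb : m <= b) by (apply Hlub; intros x [Hx _]; lra).
  assert (Hbelow : forall u, a <= u < m -> Q u).
  { intros u Hu.
    destruct (Classical_Prop.classic (exists x, E x /\ u <= x)) as [[x [[Hx1 Hx2] Hux]]|Hno].
    - apply Hx2; lra.
    - exfalso. assert (m <= u); [|lra].
      apply Hlub. intros x Ex. destruct (Rle_or_lt x u) as [|Hlt]; [assumption|].
      exfalso; apply Hno; exists x; split; [exact Ex|lra]. }
  assert (Qm : Q m).
  { destruct (Req_dec m a) as [->|Hne]; [exact Qa|]. apply Hcl; [lra|exact Hbelow]. }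
  assert (Em : forall u, a <= u <= m -> Q u).
  { intros u Hu. destruct (Req_dec u m) as [->|Hne]; [exact Qm|]. apply Hbelow; lra. }
  destruct (Req_dec m b) as [Hmb'|Hmb'].
  - intros u Hu. apply Em; lra.
  - exfalso. destruct (Hext m) as [d [Hd Hdd]]; [lra|exact Em|].
    set (m' := Rmin (m + d / 2) b).
    assert (Hm'1 : m' <= m + d/2) by apply Rmin_l.
    assert (Hm'2 : m' <= b) by apply Rmin_r.
    assert (Hm'3 : m < m') by (apply Rmin_glb_lt; lra).
    assert (E m').
    { split; [lra|]. intros u Hu. destruct (Rle_or_lt u m).
      - apply Em; lra.
      - apply Hdd; lra. }
    specialize (Hub m' H). lra.
Qed.


Lemma barrier (f df : R -> R) (a b l lo hi : R) :
  a <= b -> lo < l < hi -> f a <= l ->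
  filterlim f (at_right a) (locally (f a)) ->
  (forall x, a < x <= b -> is_derive f x (df x)) ->
  (forall x, a < x <= b -> lo < f x < hi -> df x <= 0) ->
  forall x, a <= x <= b -> f x <= l.
Proof.
  intros Hab Hl Hfa Hrc Hd Hdf.
  apply cont_ind; [exact Hab|exact Hfa| |].
  - intros t Ht Hbel.
    assert (Hrt : filterlim f (at_right t) (locally (f t))).
    { destruct (Req_dec t a) as [->|Hne]; [exact Hrc|]. apply der_rc with (df t). apply Hd; lra. }
    assert (Hft : f t <= l) by (apply Hbel; lra).
    destruct (Rlt_or_le (f t) l) as [Hlt|Hge].
    + destruct (rc_ball f t (l - f t)) as [d [Hd0 Hdd]]; [lra|exact Hrt|].
      exists d; split; [exact Hd0|]. intros u Hu Hub.
      specialize (Hdd u Hu). apply Rabs_def2 in Hdd. lra.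
    + assert (Hfe : f t = l) by lra.
      destruct (rc_ball f t (Rmin (l - lo) (hi - l))) as [d [Hd0 Hdd]];
        [apply Rmin_glb_lt; lra|exact Hrt|].
      assert (Hm1 : Rmin (l - lo) (hi - l) <= l - lo) by apply Rmin_l.
      assert (Hm2 : Rmin (l - lo) (hi - l) <= hi - l) by apply Rmin_r.
      exists d; split; [exact Hd0|]. intros u Hu Hub.
      rewrite <- Hfe.
      apply (mono_core_dec f df t u); [lra|exact Hrt| |].
      * intros x Hx; apply Hd; lra.
      * intros x Hx. apply Hdf; [lra|]. assert (Hx' : t < x < t + d) by lra.
        specialize (Hdd x Hx'). apply Rabs_def2 in Hdd. lra.
  - intros t Ht Hbel.
    destruct (Rle_or_lt (f t) l) as [H|H]; [exact H|exfalso].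
    assert (Hdt : is_derive f t (df t)) by (apply Hd; lra).
    destruct (der_cont f t (df t) Hdt (f t - l)) as [d [Hd0 Hdd]]; [lra|].
    set (u := Rmax a (t - d / 2)).
    assert (Hu1 : a <= u) by apply Rmax_l.
    assert (Hu2 : t - d/2 <= u) by apply Rmax_r.
    assert (Hu3 : u < t) by (apply Rmax_lub_lt; lra).
    assert (Hfu : f u <= l) by (apply Hbel; lra).
    assert (Hr : Rabs (u - t) < d) by (rewrite Rabs_left by lra; lra).
    specialize (Hdd u Hr). apply Rabs_def2 in Hdd. lra.
Qed.

Lemma sign_pres (f df : R -> R) (a b : R) :
  a <= b -> f a <= 0 ->
  filterlim f (at_right a) (locally (f a)) ->
  (forall x, a < x <= b -> is_derive f x (df x)) ->
  (forall x, a < x <= b -> 0 < f x -> df x <= 0) ->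
  forall x, a <= x <= b -> f x <= 0.
Proof.
  intros Hab Hfa Hrc Hd Hdf x Hx.
  destruct (Rle_or_lt (f x) 0) as [H|H]; [exact H|exfalso].
  assert (f x <= f x / 2); [|lra].
  apply (barrier f df a b (f x / 2) 0 (f x + 1)); try lra; auto.
  intros y Hy Hb. apply Hdf; lra.
Qed.


Fixpoint pic (G : R -> R -> R) (x0 c : R) (n : nat) : R -> R :=
  match n with
  | O => fun _ => c
  | S k => fun t => c + RInt (fun u => G u (pic G x0 c k u)) x0 t
  end.

Definition Gcont (G : R -> R -> R) : Prop :=
  forall phi : R -> R, (forall t, continuity_pt phi t) ->
    forall t, continuity_pt (fun u => G u (phi u)) t.

Lemma der_step G x0 c n : Gcont G ->
  (forall t, continuity_pt (pic G x0 c n) t) ->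
  forall t, is_derive (pic G x0 c (S n)) t (G t (pic G x0 c n t)).
Proof.
  intros HG Hc t.
  set (f := fun u => G u (pic G x0 c n u)).
  assert (Hf : forall u, continuous f u).
  { intros u. apply continuity_pt_filterlim. apply HG. exact Hc. }
  assert (H : is_derive (fun b => RInt f x0 b) t (f t)).
  { apply (is_derive_RInt f (fun b => RInt f x0 b) x0 t).
    - apply filter_forall. intros b.
      exact (RInt_correct f x0 b (ex_RInt_continuous f x0 b (fun z _ => Hf z))).
    - apply Hf. }
  change (is_derive (fun t => c + RInt f x0 t) t (f t)).
  replace (f t) with (0 + f t) by ring.
  apply (is_derive_plus (fun _ => c) (fun b => RInt f x0 b)).
  - exact (is_derive_const (K:=R_AbsRing) (V:=R_NormedModule) c t).
  - exact H.
Qed.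

Lemma pic_cont G x0 c n : Gcont G -> forall t, continuity_pt (pic G x0 c n) t.
Proof.
  intros HG. induction n as [|n IH]; intros t.
  - simpl. apply continuity_pt_const. intros a b; reflexivity.
  - apply der_ctp with (G t (pic G x0 c n t)). apply der_step; assumption.
Qed.

Lemma pic_der G x0 c n : Gcont G ->
  forall t, is_derive (pic G x0 c (S n)) t (G t (pic G x0 c n t)).
Proof. intros HG. apply der_step; [exact HG|]. apply pic_cont; exact HG. Qed.

Lemma pic_x0 G x0 c n : pic G x0 c n x0 = c.
Proof. destruct n; simpl; [reflexivity|]. rewrite RInt_point. unfold zero; simpl; ring. Qed.

Lemma phi_der (C x0 : R) k t :
  is_derive (fun t => C * (t - x0) ^ (S (S k)) / INR (fact (S (S k)))) t
            (C * (t - x0) ^ (S k) / INR (fact (S k))).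
Proof.
  assert (HD : INR (fact (S (S k))) = INR (S (S k)) * INR (fact (S k)))
    by (rewrite <- mult_INR; reflexivity).
  assert (H1 : INR (fact (S k)) <> 0) by apply INR_fact_neq_0.
  assert (H2 : INR (S (S k)) <> 0) by (apply not_0_INR; lia).
  remember (INR (fact (S (S k)))) as D eqn:HDe.
  remember (INR (fact (S k))) as F eqn:HFe.
  remember (S k) as m eqn:Hm.
  apply is_derive_ext with (f := fun t => (C / D) * (t - x0) ^ (S m)).
  { intros u. cbv beta. unfold Rdiv. rewrite Rmult_assoc, (Rmult_comm (/ D)), <- Rmult_assoc. reflexivity. }
  auto_derive; [exact I|].
  change (match m with 0%nat => 1 | S _ => INR m + 1 end) with (INR (S m)).
  match goal with |- ?a = ?b => change (@eq R a b) end.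
  rewrite HD.
  assert (Hq : forall y : R, C / (INR (S m) * F) * (1 * (INR (S m) * (y + - x0) ^ m)) = C * (y - x0) ^ m / F)
    by (intros y; replace (y + - x0) with (y - x0) by ring; set (X := (y - x0)^m); set (N := INR (S m)); field; split; assumption).
  apply Hq.
Qed.

Definition Lip (G : R -> R -> R) (K : R) : Prop :=
  forall t y1 y2, Rabs (G t y1 - G t y2) <= K * Rabs (y1 - y2).

Lemma pic_bound G x0 c K M : Gcont G -> 0 <= K -> Lip G K ->
  (forall t, Rabs (G t c) <= M) ->
  forall k t, x0 <= t ->
  Rabs (pic G x0 c (S k) t - pic G x0 c k t) <= M * K ^ k * (t - x0) ^ (S k) / INR (fact (S k)).
Proof.
  intros HG HK HL HM k. induction k as [|k IH]; intros t Ht.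
  - assert (Hc : forall u, continuous (fun u => G u c) u).
    { intros u. apply continuity_pt_filterlim.
      apply (HG (fun _ => c)). intros; apply continuity_pt_const. intros a b; reflexivity. }
    change (Rabs (c + RInt (fun u => G u c) x0 t - c) <= M * K ^ 0 * (t - x0) ^ 1 / INR (fact 1)).
    pose (I := (RInt (fun u => G u c) x0 t : R)).
    change (Rabs (c + I - c) <= M * K ^ 0 * (t - x0) ^ 1 / INR (fact 1)).
    replace (c + I - c) with I by ring. unfold I.
    replace (M * K ^ 0 * (t - x0) ^ 1 / INR (fact 1)) with ((t - x0) * M) by (simpl; field).
    apply abs_RInt_le_const; [exact Ht| |].
    + exact (ex_RInt_continuous (V:=R_CompleteNormedModule) _ x0 t (fun z _ => Hc z)).
    + intros u _. apply HM.
  - set (D := fun u => pic G x0 c (S (S k)) u - pic G x0 c (S k) u).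
    set (dD := fun u => G u (pic G x0 c (S k) u) - G u (pic G x0 c k u)).
    set (phi := fun u => (M * K ^ (S k)) * (u - x0) ^ (S (S k)) / INR (fact (S (S k)))).
    set (dphi := fun u => (M * K ^ (S k)) * (u - x0) ^ (S k) / INR (fact (S k))).
    assert (HdD : forall u, is_derive D u (dD u)).
    { intros u. apply (is_derive_minus (pic G x0 c (S (S k))) (pic G x0 c (S k))); apply pic_der; exact HG. }
    assert (Hdphi : forall u, is_derive phi u (dphi u)) by (intros u; apply phi_der).
    assert (Hcmp : forall u, x0 < u -> Rabs (dD u) <= dphi u).
    { intros u Hu. unfold dD, dphi.
      eapply Rle_trans; [apply HL|].
      eapply Rle_trans; [apply Rmult_le_compat_l; [exact HK|apply IH; lra]|].
      right. rewrite <- (tech_pow_Rmult K k). set (A := K ^ k). set (B := (u - x0) ^ (S k)). set (F := INR (fact (S k))). field. unfold F; apply INR_fact_neq_0. }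
    assert (HD0 : D x0 = 0) by (unfold D; rewrite !pic_x0; ring).
    assert (Hp0 : phi x0 = 0).
    { unfold phi. replace (x0 - x0) with 0 by ring. rewrite pow_i by lia.
      unfold Rdiv. rewrite Rmult_0_r. apply Rmult_0_l. }
    change (Rabs (D t) <= phi t).
    destruct (Req_dec t x0) as [->|Hne]; [rewrite HD0, Hp0, Rabs_R0; right; reflexivity|].
    assert (Hlt : x0 < t) by lra.
    assert (H1 : phi x0 - D x0 <= phi t - D t).
    { apply (mono_core (fun u => phi u - D u) (fun u => dphi u - dD u) x0 t Hlt).
      - apply (der_rc (fun u => phi u - D u) x0 (dphi x0 - dD x0)). apply (is_derive_minus phi D); auto.
      - intros x Hx. apply (is_derive_minus phi D); auto.
      - intros x Hx. specialize (Hcmp x (proj1 Hx)).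
        assert (dD x <= Rabs (dD x)) by apply Rle_abs. lra. }
    assert (H2 : phi x0 + D x0 <= phi t + D t).
    { apply (mono_core (fun u => phi u + D u) (fun u => dphi u + dD u) x0 t Hlt).
      - apply (der_rc (fun u => phi u + D u) x0 (dphi x0 + dD x0)). apply (is_derive_plus phi D); auto.
      - intros x Hx. apply (is_derive_plus phi D); auto.
      - intros x Hx. specialize (Hcmp x (proj1 Hx)).
        assert (- dD x <= Rabs (dD x)) by apply Rabs_maj2. lra. }
    rewrite HD0, Hp0 in H1, H2. apply Rabs_le. lra.
Qed.


Fixpoint Spart (q : R) (n : nat) : R :=
  match n with O => 0 | S k => Spart q k + q ^ k / INR (fact k) end.

Lemma Spart_sum q n : Spart q (S n) = sum_n (fun k => scal (pow_n q k) (/ INR (fact k))) n.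
Proof.
  induction n as [|n IH].
  - rewrite sum_O. rewrite pow_n_pow. simpl. unfold scal; simpl. unfold mult; simpl. field.
  - rewrite sum_Sn, <- IH. rewrite pow_n_pow. change (Spart q (S (S n))) with (Spart q (S n) + q ^ (S n) / INR (fact (S n))).
    unfold plus, scal; simpl. unfold mult; simpl. unfold Rdiv. reflexivity.
Qed.

Lemma Spart_lim q : is_lim_seq (Spart q) (exp q).
Proof.
  apply is_lim_seq_incr_1.
  apply is_lim_seq_ext with (u := sum_n (fun k => scal (pow_n q k) (/ INR (fact k)))).
  { intros n; symmetry; apply Spart_sum. }
  exact (is_exp_Reals q).
Qed.

Lemma beta_nonneg q k : 0 <= q -> 0 <= q ^ k / INR (fact k).
Proof.
  intros Hq. apply Rmult_le_pos; [apply pow_le; exact Hq|].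
  left. apply Rinv_0_lt_compat. apply INR_fact_lt_0.
Qed.

Lemma Spart_mono q : 0 <= q -> forall n m, (n <= m)%nat -> Spart q n <= Spart q m.
Proof.
  intros Hq n m Hnm. induction Hnm as [|m Hnm IH]; [lra|].
  simpl. assert (0 <= q ^ m / INR (fact m)) by (apply beta_nonneg; exact Hq). lra.
Qed.

Lemma Spart_le_exp q : 0 <= q -> forall n, Spart q n <= exp q.
Proof.
  intros Hq n. apply (is_lim_seq_incr_compare (Spart q) (exp q) (Spart_lim q)).
  intros k. apply Spart_mono; [exact Hq|lia].
Qed.

Lemma pic_step_bound G x0 c K M R : Gcont G -> 0 <= K -> 0 <= M -> Lip G K ->
  (forall t, Rabs (G t c) <= M) ->
  forall k t, x0 <= t <= x0 + R ->
  Rabs (pic G x0 c (S k) t - pic G x0 c k t) <= (t - x0) * M * ((K * R) ^ k / INR (fact k)).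
Proof.
  intros HG HK HM HL HGM k t Ht.
  eapply Rle_trans; [apply (pic_bound G x0 c K M HG HK HL HGM); lra|].
  set (tau := t - x0).
  assert (Htau : 0 <= tau <= R) by (unfold tau; lra).
  assert (HF1 : INR (fact (S k)) = INR (S k) * INR (fact k)) by (rewrite <- mult_INR; reflexivity).
  assert (HF0 : 0 < INR (fact k)) by apply INR_fact_lt_0.
  assert (HSk : 1 <= INR (S k)) by (rewrite S_INR; assert (0 <= INR k) by apply pos_INR; lra).
  rewrite Rpow_mult_distr.
  replace (M * K ^ k * tau ^ S k / INR (fact (S k))) with ((M * K ^ k * tau) * tau ^ k * / INR (fact (S k)))
    by (simpl pow; unfold Rdiv; ring).
  replace (tau * M * (K ^ k * R ^ k / INR (fact k))) with ((M * K ^ k * tau) * R ^ k * / INR (fact k))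
    by (unfold Rdiv; ring).
  assert (Ha : 0 <= M * K ^ k * tau) by (apply Rmult_le_pos; [apply Rmult_le_pos; [exact HM|apply pow_le; exact HK]|lra]).
  apply Rmult_le_compat.
  - apply Rmult_le_pos; [exact Ha|apply pow_le; lra].
  - left; apply Rinv_0_lt_compat; apply INR_fact_lt_0.
  - apply Rmult_le_compat_l; [exact Ha|]. apply pow_incr; lra.
  - apply Rinv_le_contravar; [exact HF0|]. rewrite HF1.
    rewrite <- (Rmult_1_l (INR (fact k))) at 1. apply Rmult_le_compat_r; lra.
Qed.

Lemma pic_diff G x0 c K M R : Gcont G -> 0 <= K -> 0 <= M -> 0 <= R -> Lip G K ->
  (forall t, Rabs (G t c) <= M) ->
  forall t, x0 <= t <= x0 + R -> forall n m, (n <= m)%nat ->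
  Rabs (pic G x0 c m t - pic G x0 c n t) <= (t - x0) * M * (Spart (K * R) m - Spart (K * R) n).
Proof.
  intros HG HK HM HR HL HGM t Ht n m Hnm.
  assert (Hq : 0 <= K * R) by (apply Rmult_le_pos; assumption).
  assert (Hc : 0 <= (t - x0) * M) by (apply Rmult_le_pos; lra).
  induction Hnm as [|m Hnm IH].
  - replace (pic G x0 c n t - pic G x0 c n t) with 0 by ring. rewrite Rabs_R0. right; ring.
  - replace (pic G x0 c (S m) t - pic G x0 c n t) with
      ((pic G x0 c (S m) t - pic G x0 c m t) + (pic G x0 c m t - pic G x0 c n t)) by ring.
    eapply Rle_trans; [apply Rabs_triang|].
    assert (H1 := pic_step_bound G x0 c K M R HG HK HM HL HGM m t Ht).
    simpl Spart. lra.
Qed.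

Lemma pic_conv G x0 c K M : Gcont G -> 0 <= K -> 0 <= M -> Lip G K ->
  (forall t, Rabs (G t c) <= M) ->
  forall t, x0 <= t -> ex_finite_lim_seq (fun n => pic G x0 c n t).
Proof.
  intros HG HK HM HL HGM t Ht.
  assert (HR : 0 <= t - x0) by lra.
  assert (Hq : 0 <= K * (t - x0)) by (apply Rmult_le_pos; assumption).
  assert (Hc : 0 <= (t - x0) * M) by (apply Rmult_le_pos; lra).
  apply ex_lim_seq_cauchy_corr. intros eps.
  assert (Heps' : 0 < eps / (2 * ((t - x0) * M + 1))) by (apply Rdiv_lt_0_compat; [apply cond_pos|lra]).
  assert (Hl := Spart_lim (K * (t - x0))). apply is_lim_seq_spec in Hl.
  destruct (Hl (mkposreal _ Heps')) as [N HN]. simpl in HN.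
  exists N. intros n m Hn Hm.
  assert (Hb : forall n m, (N <= n)%nat -> (n <= m)%nat ->
     Rabs (pic G x0 c n t - pic G x0 c m t) < eps).
  { clear n m Hn Hm. intros n m Hn Hnm.
    rewrite Rabs_minus_sym.
    eapply Rle_lt_trans; [apply (pic_diff G x0 c K M (t - x0) HG HK HM HR HL HGM t); [lra|exact Hnm]|].
    specialize (HN n Hn) as H1. specialize (HN m (Nat.le_trans _ _ _ Hn Hnm)) as H2.
    apply Rabs_def2 in H1. apply Rabs_def2 in H2.
    assert (Hd : Spart (K * (t - x0)) m - Spart (K * (t - x0)) n < 2 * (eps / (2 * ((t - x0) * M + 1)))) by lra.
    assert (Hd0 : 0 <= Spart (K * (t - x0)) m - Spart (K * (t - x0)) n) by (assert (H := Spart_mono _ Hq n m Hnm); lra).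
    assert ((t - x0) * M * (Spart (K * (t - x0)) m - Spart (K * (t - x0)) n) <= (t - x0) * M * (2 * (eps / (2 * ((t - x0) * M + 1)))))
      by (apply Rmult_le_compat_l; lra).
    assert ((t - x0) * M * (2 * (eps / (2 * ((t - x0) * M + 1)))) < eps).
    { replace ((t - x0) * M * (2 * (eps / (2 * ((t - x0) * M + 1))))) with (eps * (((t - x0) * M) / ((t - x0) * M + 1))) by (field; lra).
      assert (((t - x0) * M) / ((t - x0) * M + 1) < 1) by (apply Rmult_lt_reg_r with ((t - x0) * M + 1); [lra|]; unfold Rdiv; rewrite Rmult_assoc, Rinv_l by lra; lra).
      assert (0 < eps) by apply cond_pos. nra. }
    lra. }
  destruct (Nat.le_ge_cases n m) as [Hnm|Hnm].
  - apply Hb; assumption.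
  - rewrite Rabs_minus_sym. apply Hb; assumption.
Qed.

Definition hsol G x0 c (t : R) : R := real (Lim_seq (fun n => pic G x0 c (S n) t)).

Lemma hsol_lim G x0 c K M : Gcont G -> 0 <= K -> 0 <= M -> Lip G K ->
  (forall t, Rabs (G t c) <= M) ->
  forall t, x0 <= t -> is_lim_seq (fun n => pic G x0 c n t) (hsol G x0 c t).
Proof.
  intros HG HK HM HL HGM t Ht.
  assert (He := pic_conv G x0 c K M HG HK HM HL HGM t Ht).
  assert (Hc := Lim_seq_correct' _ He).
  apply ex_finite_lim_seq_correct in He. destruct He as [_ Hf].
  unfold hsol. rewrite (Lim_seq_incr_1 (fun n => pic G x0 c n t)).
  exact Hc.
Qed.

Lemma hsol_tail G x0 c K M R : Gcont G -> 0 <= K -> 0 <= M -> 0 <= R -> Lip G K ->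
  (forall t, Rabs (G t c) <= M) ->
  forall t, x0 <= t <= x0 + R -> forall n,
  Rabs (pic G x0 c n t - hsol G x0 c t) <= (t - x0) * M * (exp (K * R) - Spart (K * R) n).
Proof.
  intros HG HK HM HR HL HGM t Ht n.
  assert (Hl := hsol_lim G x0 c K M HG HK HM HL HGM t (proj1 Ht)).
  assert (H1 : is_lim_seq (fun m => Rabs (pic G x0 c m t - pic G x0 c n t))
                 (Rabs (hsol G x0 c t - pic G x0 c n t))).
  { apply (is_lim_seq_abs _ (Finite (hsol G x0 c t - pic G x0 c n t))).
    apply (is_lim_seq_minus' _ _ (hsol G x0 c t) (pic G x0 c n t)); [exact Hl|apply is_lim_seq_const]. }
  assert (H2 : is_lim_seq (fun m => (t - x0) * M * (Spart (K * R) m - Spart (K * R) n))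
                 ((t - x0) * M * (exp (K * R) - Spart (K * R) n))).
  { apply (is_lim_seq_scal_l _ ((t - x0) * M) (Finite (exp (K * R) - Spart (K * R) n))).
    apply (is_lim_seq_minus' _ _ (exp (K * R)) (Spart (K * R) n)); [apply Spart_lim|apply is_lim_seq_const]. }
  assert (H3 := is_lim_seq_le_loc _ _ _ _ (ex_intro _ n (fun m Hm => pic_diff G x0 c K M R HG HK HM HR HL HGM t Ht n m Hm)) H1 H2).
  simpl in H3. rewrite Rabs_minus_sym. exact H3.
Qed.


Lemma ev_small q C (eps : R) : 0 <= C -> 0 < eps ->
  exists N, forall n, (N <= n)%nat -> C * (exp q - Spart q n) < eps.
Proof.
  intros HC He.
  assert (He' : 0 < eps / (C + 1)) by (apply Rdiv_lt_0_compat; lra).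
  assert (Hl := Spart_lim q). apply is_lim_seq_spec in Hl.
  destruct (Hl (mkposreal _ He')) as [N HN]. simpl in HN.
  exists N. intros n Hn. specialize (HN n Hn). apply Rabs_def2 in HN.
  assert (H1 : exp q - Spart q n < eps / (C + 1)) by lra.
  destruct (Rle_or_lt (exp q - Spart q n) 0) as [H0|H0].
  - assert (C * (exp q - Spart q n) <= 0) by (apply Rmult_le_0_l; lra). lra.
  - assert (C * (exp q - Spart q n) <= C * (eps / (C + 1))) by (apply Rmult_le_compat_l; lra).
    assert (C * (eps / (C + 1)) < eps).
    { replace (C * (eps / (C + 1))) with (eps * (C / (C + 1))) by (field; lra).
      assert (C / (C + 1) < 1) by (apply Rmult_lt_reg_r with (C + 1); [lra|];
        unfold Rdiv; rewrite Rmult_assoc, Rinv_l by lra; lra).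
      nra. }
    lra.
Qed.

Theorem picard_exists G x0 c K M : Gcont G -> 0 <= K -> 0 <= M -> Lip G K ->
  (forall t, Rabs (G t c) <= M) ->
  hsol G x0 c x0 = c /\ filterlim (hsol G x0 c) (at_right x0) (locally c) /\
  forall t, x0 < t -> is_derive (hsol G x0 c) t (G t (hsol G x0 c t)).
Proof.
  intros HG HK HM HL HGM.
  assert (H0 : hsol G x0 c x0 = c).
  { unfold hsol. rewrite (Lim_seq_ext _ (fun _ => c)) by (intros n; apply pic_x0).
    rewrite Lim_seq_const. reflexivity. }
  split; [exact H0|]. split.
  - rewrite <- H0 at 2. apply rc_of_eps. intros e He.
    set (d := Rmin 1 (e / (M * exp K + 1))).
    assert (HexpK : 0 < exp K) by apply exp_pos.
    assert (HMe : 0 <= M * exp K) by (apply Rmult_le_pos; lra).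
    assert (Hd1 : d <= 1) by apply Rmin_l.
    assert (Hd2 : d <= e / (M * exp K + 1)) by apply Rmin_r.
    assert (Hd0 : 0 < d) by (apply Rmin_glb_lt; [lra|apply Rdiv_lt_0_compat; lra]).
    exists d; split; [exact Hd0|]. intros u Hu.
    assert (Ht := hsol_tail G x0 c K M 1 HG HK HM ltac:(lra) HL HGM u ltac:(lra) 0).
    simpl pic in Ht. simpl Spart in Ht. rewrite Rmult_1_r in Ht.
    rewrite H0. rewrite Rabs_minus_sym. eapply Rle_lt_trans; [exact Ht|].
    replace ((u - x0) * M * (exp K - 0)) with ((u - x0) * (M * exp K)) by ring.
    apply Rle_lt_trans with (d * (M * exp K)).
    + apply Rmult_le_compat_r; lra.
    + apply Rle_lt_trans with (e / (M * exp K + 1) * (M * exp K)).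
      * apply Rmult_le_compat_r; lra.
      * replace (e / (M * exp K + 1) * (M * exp K)) with (e * (M * exp K / (M * exp K + 1))) by (field; lra).
        assert (M * exp K / (M * exp K + 1) < 1) by (apply Rmult_lt_reg_r with (M * exp K + 1); [lra|];
          unfold Rdiv; rewrite Rmult_assoc, Rinv_l by lra; lra).
        nra.
  - intros t Ht.
    set (R := t - x0 + 1).
    assert (HR : 0 <= R) by (unfold R; lra).
    set (D := fun x => x0 < x /\ x < x0 + R).
    set (fn := fun n => pic G x0 c (S n)).
    assert (HDer : forall n x, Derive (fn n) x = G x (pic G x0 c n x)).
    { intros n x. apply is_derive_unique. apply pic_der; exact HG. }
    assert (HlimD : forall x, D x -> Lim_seq (fun n => Derive (fn n) x) = G x (hsol G x0 c x)).
    { intros x Hx. apply is_lim_seq_unique. apply is_lim_seq_spec. intros eps.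
      destruct (ev_small (K * R) (K * ((x - x0) * M)) eps) as [N HN].
      { apply Rmult_le_pos; [exact HK|apply Rmult_le_pos; unfold D in Hx; lra]. }
      { apply cond_pos. }
      exists N. intros n Hn. rewrite HDer.
      eapply Rle_lt_trans; [apply HL|].
      eapply Rle_lt_trans; [|apply (HN n Hn)].
      assert (Hb := hsol_tail G x0 c K M R HG HK HM HR HL HGM x ltac:(unfold D in Hx; lra) n).
      rewrite Rmult_assoc. apply Rmult_le_compat_l; [exact HK|]. exact Hb. }
    assert (Hd := CVU_Derive fn D).
    assert (Hopen : open D) by (apply open_and; [apply open_gt|apply open_lt]).
    assert (Hconn : is_connected D) by (intros a b x Ha Hb Hx; unfold D in *; lra).
    assert (HCV : CVU_dom fn D).
    { intros eps.
      destruct (ev_small (K * R) (R * M) eps) as [N HN].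
      { apply Rmult_le_pos; lra. }
      { apply cond_pos. }
      exists N. intros n Hn x Hx. unfold fn.
      change (real (Lim_seq (fun n0 : nat => pic G x0 c (S n0) x))) with (hsol G x0 c x).
      assert (Hb := hsol_tail G x0 c K M R HG HK HM HR HL HGM x ltac:(unfold D in Hx; lra) (S n)).
      eapply Rle_lt_trans; [exact Hb|].
      eapply Rle_lt_trans; [|apply (HN (S n)); lia].
      apply Rmult_le_compat_r.
      - assert (Spart (K * R) (S n) <= exp (K * R)) by (apply Spart_le_exp; apply Rmult_le_pos; lra). lra.
      - apply Rmult_le_compat_r; [exact HM|]. unfold D in Hx; lra. }
    assert (HCVD : CVU_dom (fun n x => Derive (fn n) x) D).
    { intros eps.
      destruct (ev_small (K * R) (K * (R * M)) eps) as [N HN].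
      { apply Rmult_le_pos; [exact HK|apply Rmult_le_pos; lra]. }
      { apply cond_pos. }
      exists N. intros n Hn x Hx.
      rewrite (HlimD x Hx). simpl real. rewrite HDer.
      eapply Rle_lt_trans; [apply HL|].
      eapply Rle_lt_trans; [|apply (HN n Hn)].
      assert (Hb := hsol_tail G x0 c K M R HG HK HM HR HL HGM x ltac:(unfold D in Hx; lra) n).
      rewrite (Rmult_assoc K). apply Rmult_le_compat_l; [exact HK|].
      eapply Rle_trans; [exact Hb|].
      apply Rmult_le_compat_r.
      - assert (Spart (K * R) n <= exp (K * R)) by (apply Spart_le_exp; apply Rmult_le_pos; lra). lra.
      - apply Rmult_le_compat_r; [exact HM|]. unfold D in Hx; lra. }
    assert (HtD : D t) by (unfold D, R; lra).
    specialize (Hd Hopen Hconn HCV).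
    assert (Hex : forall n x, D x -> ex_derive (fn n) x).
    { intros n x _. exists (G x (pic G x0 c n x)). apply pic_der; exact HG. }
    assert (Hcd : forall n x, D x -> continuity_pt (Derive (fn n)) x).
    { intros n x _. apply continuity_pt_ext with (f := fun x => G x (pic G x0 c n x)).
      { intros y; symmetry; apply HDer. }
      apply HG. apply pic_cont; exact HG. }
    specialize (Hd Hex Hcd HCVD t HtD).
    rewrite (HlimD t HtD) in Hd. simpl real in Hd.
    exact Hd.
Qed.


Definition rc (f : R -> R) (a : R) := filterlim f (at_right a) (locally (f a)).

Lemma rc_plus f g a : rc f a -> rc g a -> rc (fun x => f x + g x) a.
Proof.
  intros Hf Hg. unfold rc.
  apply (filterlim_comp_2 (G:=locally (f a)) (H:=locally (g a)) f g Rplus); [exact Hf|exact Hg|].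
  exact (filterlim_plus (K:=R_AbsRing) (V:=R_NormedModule) (f a) (g a)).
Qed.

Lemma rc_mult f g a : rc f a -> rc g a -> rc (fun x => f x * g x) a.
Proof.
  intros Hf Hg. unfold rc.
  apply (filterlim_comp_2 (G:=locally (f a)) (H:=locally (g a)) f g Rmult); [exact Hf|exact Hg|].
  exact (filterlim_mult (K:=R_AbsRing) (f a) (g a)).
Qed.

Lemma rc_cont f a : continuity_pt f a -> rc f a.
Proof.
  intros Hc. unfold rc. apply (filterlim_filter_le_1 (F := locally a)).
  - apply filter_le_within.
  - apply continuity_pt_filterlim. exact Hc.
Qed.

Lemma rc_const c a : rc (fun _ => c) a.
Proof. apply rc_cont. apply continuity_pt_const. intros u v; reflexivity. Qed.

Lemma rc_opp f a : rc f a -> rc (fun x => - f x) a.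
Proof.
  intros Hf. apply rc_mult with (f := fun _ => -1) in Hf; [|apply rc_const].
  unfold rc in *. eapply filterlim_ext; [|replace (- f a) with (-1 * f a) by ring; exact Hf].
  intros x; simpl; ring.
Qed.

Lemma rc_minus f g a : rc f a -> rc g a -> rc (fun x => f x - g x) a.
Proof. intros Hf Hg. apply (rc_plus f (fun x => - g x)); [exact Hf|apply rc_opp; exact Hg]. Qed.

Lemma der_mult f g df dg x : is_derive f x df -> is_derive g x dg ->
  is_derive (fun t => f t * g t) x (df * g x + f x * dg).
Proof.
  intros H1 H2. apply is_derive_Reals. apply is_derive_Reals in H1. apply is_derive_Reals in H2.
  apply (derivable_pt_lim_mult f g x df dg H1 H2).
Qed.

Lemma der_plus f g df dg x : is_derive f x df -> is_derive g x dg ->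
  is_derive (fun t => f t + g t) x (df + dg).
Proof.
  intros H1 H2. apply is_derive_Reals. apply is_derive_Reals in H1. apply is_derive_Reals in H2.
  apply (derivable_pt_lim_plus f g x df dg H1 H2).
Qed.

Lemma der_minus f g df dg x : is_derive f x df -> is_derive g x dg ->
  is_derive (fun t => f t - g t) x (df - dg).
Proof.
  intros H1 H2. apply is_derive_Reals. apply is_derive_Reals in H1. apply is_derive_Reals in H2.
  apply (derivable_pt_lim_minus f g x df dg H1 H2).
Qed.

Lemma der_expK (K x : R) : is_derive (fun t => exp (- K * t)) x (- K * exp (- K * x)).
Proof. auto_derive; [exact I|]. ring. Qed.

Lemma der_E (s x : R) : 0 < x -> s <> 0 ->
  is_derive (fun t => exp (- ln t / s)) x (- exp (- ln x / s) / (s * x)).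
Proof.
  intros Hx Hs. auto_derive; [exact Hx|]. assert (Heq : - ln x * / s = - ln x / s) by reflexivity. rewrite Heq. field. split; lra.
Qed.

Lemma der_ln x : 0 < x -> is_derive ln x (/ x).
Proof. intros Hx. auto_derive; [exact Hx|]. ring. Qed.

Lemma rc_cont_der f a l : is_derive f a l -> rc f a.
Proof. intros H. apply rc_cont. apply der_ctp with l; exact H. Qed.

Lemma exp_le_ x y : x <= y -> exp x <= exp y.
Proof. intros H. destruct (Req_dec x y) as [->|Hne]; [lra|left; apply exp_increasing; lra]. Qed.

Lemma ln_le_ x y : 0 < x -> x <= y -> ln x <= ln y.
Proof. intros H0 H. destruct (Req_dec x y) as [->|Hne]; [lra|left; apply ln_increasing; lra]. Qed.


Definition Pinc (P : R -> R) := forall x y, 0 <= x -> x < y -> P x < P y.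

Lemma der_const (c x : R) : is_derive (fun _ => c) x 0.
Proof. apply is_derive_Reals. apply derivable_pt_lim_const. Qed.

Lemma P_der_ex P : C2_on_nonneg P -> Pinc P ->
  exists dP, (forall x, 0 < x -> is_derive P x (dP x)) /\ (forall x, 0 < x -> 0 <= dP x).
Proof.
  intros [Q [HQ HQP]] Hinc.
  assert (Hd : forall x, 0 < x -> is_derive P x (Derive Q x)).
  { intros x Hx. apply is_derive_ext_loc with (f := Q).
    - exists (mkposreal x Hx). intros t Ht. apply HQP.
      unfold ball in Ht; simpl in Ht; unfold AbsRing_ball, abs, minus, plus, opp in Ht; simpl in Ht.
      apply Rabs_def2 in Ht. lra.
    - apply Derive_correct. apply (HQ x). }
  exists (Derive Q). split; [exact Hd|].
  intros x Hx. destruct (Rle_or_lt 0 (Derive Q x)) as [H|H]; [exact H|exfalso].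
  specialize (Hd x Hx). apply is_derive_Reals in Hd.
  destruct (Hd (- Derive Q x)) as [d Hdd]; [lra|].
  set (h := Rmin (d / 2) 1).
  assert (Hh0 : 0 < h) by (apply Rmin_glb_lt; [apply Rdiv_lt_0_compat; [apply cond_pos|lra]|lra]).
  assert (Hh1 : h <= d / 2) by apply Rmin_l.
  assert (Hd0 : 0 < d) by apply cond_pos.
  specialize (Hdd h ltac:(lra) ltac:(rewrite Rabs_right by lra; lra)).
  assert (Hp : P x < P (x + h)) by (apply Hinc; lra).
  assert (Hq : 0 < (P (x + h) - P x) / h) by (apply Rdiv_lt_0_compat; lra).
  apply Rabs_def2 in Hdd. lra.
Qed.

Definition gs s P x0 g := global_solution s P x0 g.

Lemma rhs_alt s P x g : s <> 0 -> x <> 0 -> g <> 0 ->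
  rhs s P x g = (1 + g) / (s * x) - P x / (s * x * g).
Proof. intros Hs Hx Hg. unfold rhs. field. repeat split; assumption. Qed.

Lemma EmulR s x : exp (- ln x / s) * Rpower x (1 / s) = 1.
Proof.
  unfold Rpower. rewrite <- exp_plus. replace (- ln x / s + 1 / s * ln x) with 0.
  - apply exp_0.
  - unfold Rdiv. ring.
Qed.

Lemma Epos s x : 0 < exp (- ln x / s).
Proof. apply exp_pos. Qed.

Lemma L1 s P x0 g : 0 < s -> 0 < x0 -> (forall x, 0 < x -> 0 < P x) -> gs s P x0 g ->
  forall a b, x0 < a -> a <= b ->
  (1 + g b) * exp (- ln b / s) <= (1 + g a) * exp (- ln a / s).
Proof.
  intros Hs Hx0 HP [Hpos [Hrc Hder]] a b Ha Hab.
  destruct (Req_dec a b) as [->|Hne]; [lra|].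
  set (df := fun x => (0 + rhs s P x (g x)) * exp (- ln x / s) + (1 + g x) * (- exp (- ln x / s) / (s * x))).
  assert (Hd : forall x, x0 < x -> is_derive (fun x => (1 + g x) * exp (- ln x / s)) x (df x)).
  { intros x Hx. apply (der_mult (fun x => 1 + g x) (fun x => exp (- ln x / s))).
    - apply (der_plus (fun _ => 1) g); [apply der_const|apply Hder; exact Hx].
    - apply der_E; lra. }
  apply (mono_core_dec (fun x => (1 + g x) * exp (- ln x / s)) df a b); [lra| |intros; apply Hd; lra|].
  - apply (rc_cont_der (fun x => (1 + g x) * exp (- ln x / s)) a (df a)). apply Hd; lra.
  - intros x Hx. unfold df.
    assert (Hgx : 0 < g x) by (apply Hpos; lra).
    assert (HPx : 0 < P x) by (apply HP; lra).
    assert (HE := Epos s x).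
    replace ((0 + rhs s P x (g x)) * exp (- ln x / s) + (1 + g x) * (- exp (- ln x / s) / (s * x)))
      with (- (exp (- ln x / s) * P x / (s * x * g x))).
    2:{ unfold rhs. field. repeat split; lra. }
    assert (0 < exp (- ln x / s) * P x / (s * x * g x)).
    { apply Rdiv_lt_0_compat; [apply Rmult_lt_0_compat; lra|].
      apply Rmult_lt_0_compat; [apply Rmult_lt_0_compat; lra|lra]. }
    lra.
Qed.

Lemma L1' s P x0 g : 0 < s -> 0 < x0 -> (forall x, 0 < x -> 0 < P x) -> gs s P x0 g ->
  forall a b, x0 < a -> a <= b ->
  1 + g b <= (1 + g a) * exp (- ln a / s) * Rpower b (1 / s).
Proof.
  intros Hs Hx0 HP Hg a b Ha Hab.
  assert (H := L1 s P x0 g Hs Hx0 HP Hg a b Ha Hab).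
  assert (Hr : 0 < Rpower b (1 / s)) by (unfold Rpower; apply exp_pos).
  apply Rmult_le_compat_r with (r := Rpower b (1 / s)) in H; [|lra].
  rewrite Rmult_assoc, EmulR, Rmult_1_r in H. exact H.
Qed.

Lemma L2 s P x0 g v : 0 < s -> 0 < x0 -> (forall x, 0 < x -> 0 < P x) -> gs s P x0 g -> gs s P x0 v ->
  (forall x, x0 <= x -> v x <= g x) ->
  forall a b, x0 < a -> a <= b ->
  (g a - v a) * exp (- ln a / s) <= (g b - v b) * exp (- ln b / s).
Proof.
  intros Hs Hx0 HP [Hpos [Hrc Hder]] [Hvpos [Hvrc Hvder]] Hle a b Ha Hab.
  destruct (Req_dec a b) as [->|Hne]; [lra|].
  set (df := fun x => (rhs s P x (g x) - rhs s P x (v x)) * exp (- ln x / s) + (g x - v x) * (- exp (- ln x / s) / (s * x))).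
  assert (Hd : forall x, x0 < x -> is_derive (fun x => (g x - v x) * exp (- ln x / s)) x (df x)).
  { intros x Hx. apply (der_mult (fun x => g x - v x) (fun x => exp (- ln x / s))).
    - apply (der_minus g v); [apply Hder; exact Hx|apply Hvder; exact Hx].
    - apply der_E; lra. }
  apply (mono_core (fun x => (g x - v x) * exp (- ln x / s)) df a b); [lra| |intros; apply Hd; lra|].
  - apply (rc_cont_der (fun x => (g x - v x) * exp (- ln x / s)) a (df a)). apply Hd; lra.
  - intros x Hx. unfold df.
    assert (Hgx : 0 < g x) by (apply Hpos; lra).
    assert (Hvx : 0 < v x) by (apply Hvpos; lra).
    assert (HPx : 0 < P x) by (apply HP; lra).
    assert (Hw : 0 <= g x - v x) by (assert (v x <= g x) by (apply Hle; lra); lra).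
    assert (HE := Epos s x).
    replace ((rhs s P x (g x) - rhs s P x (v x)) * exp (- ln x / s) + (g x - v x) * (- exp (- ln x / s) / (s * x)))
      with ((exp (- ln x / s) * P x * (g x - v x)) / (s * x * g x * v x)).
    2:{ unfold rhs. field. repeat split; lra. }
    apply Rmult_le_pos.
    + apply Rmult_le_pos; [apply Rmult_le_pos; lra|exact Hw].
    + left. apply Rinv_0_lt_compat. repeat apply Rmult_lt_0_compat; lra.
Qed.

Lemma L4 s P x0 g : gs s P x0 g -> forall X, x0 <= X ->
  exists mu, 0 < mu /\ forall u, x0 <= u <= X -> mu <= g u.
Proof.
  intros [Hpos [Hrc Hder]] X HX.
  assert (Hg0 : 0 < g x0) by (apply Hpos; lra).
  destruct (rc_ball g x0 (g x0 / 2)) as [d [Hd Hdd]]; [lra|exact Hrc|].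
  assert (Hnear : forall u, x0 <= u < x0 + d -> g x0 / 2 <= g u).
  { intros u Hu. destruct (Req_dec u x0) as [->|Hne]; [lra|].
    specialize (Hdd u ltac:(lra)). apply Rabs_def2 in Hdd. lra. }
  set (a := x0 + d / 2).
  destruct (Rlt_or_le X a) as [HXa|HXa].
  - exists (g x0 / 2). split; [lra|]. intros u Hu. apply Hnear. unfold a in HXa; lra.
  - destruct (continuity_ab_min g a X HXa) as [mx [Hmx1 Hmx2]].
    { intros c Hc. apply der_ctp with (rhs s P c (g c)). apply Hder. unfold a in Hc; lra. }
    assert (Hgm : 0 < g mx) by (apply Hpos; unfold a in Hmx2; lra).
    exists (Rmin (g x0 / 2) (g mx)). split; [apply Rmin_glb_lt; lra|].
    intros u Hu. destruct (Rlt_or_le u a) as [Hua|Hua].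
    + eapply Rle_trans; [apply Rmin_l|]. apply Hnear. unfold a in Hua; lra.
    + eapply Rle_trans; [apply Rmin_r|]. apply Hmx1; lra.
Qed.

Lemma frac_le a a' b b' : 0 <= a -> a <= a' -> 0 < b' -> b' <= b -> a / b <= a' / b'.
Proof.
  intros H1 H2 H3 H4. unfold Rdiv. apply Rmult_le_compat; [lra| |lra|].
  - left; apply Rinv_0_lt_compat; lra.
  - apply Rinv_le_contravar; lra.
Qed.

Lemma L3 s P x0 g1 g2 : 0 < s -> 0 < x0 -> Pinc P -> (forall x, 0 < x -> 0 < P x) ->
  gs s P x0 g1 -> gs s P x0 g2 -> g1 x0 <= g2 x0 ->
  forall x, x0 <= x -> g1 x <= g2 x.
Proof.
  intros Hs Hx0 Hinc HP Hg1 Hg2 H0 X HX.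
  destruct (L4 s P x0 g1 Hg1 X HX) as [m1 [Hm1 Hb1]].
  destruct (L4 s P x0 g2 Hg2 X HX) as [m2 [Hm2 Hb2]].
  destruct Hg1 as [Hpos1 [Hrc1 Hder1]]. destruct Hg2 as [Hpos2 [Hrc2 Hder2]].
  set (mu := Rmin m1 m2).
  assert (Hmu : 0 < mu) by (apply Rmin_glb_lt; lra).
  assert (Hmu1 : mu <= m1) by apply Rmin_l. assert (Hmu2 : mu <= m2) by apply Rmin_r.
  assert (HPX : 0 < P X) by (apply HP; lra).
  set (K := 1 / (s * x0) + P X / (s * x0 * (mu * mu))).
  set (f := fun x => (g1 x - g2 x) * exp (- K * x)).
  set (df := fun x => (rhs s P x (g1 x) - rhs s P x (g2 x)) * exp (- K * x) + (g1 x - g2 x) * (- K * exp (- K * x))).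
  assert (Hd : forall x, x0 < x -> is_derive f x (df x)).
  { intros x Hx. apply (der_mult (fun x => g1 x - g2 x) (fun x => exp (- K * x))).
    - apply (der_minus g1 g2); [apply Hder1; exact Hx|apply Hder2; exact Hx].
    - apply der_expK. }
  assert (Hf := sign_pres f df x0 X HX).
  assert (Hres : f X <= 0).
  { apply Hf; [ | | intros y Hy; apply Hd; lra | | lra ].
    - unfold f. assert (0 < exp (- K * x0)) by apply exp_pos.
      assert (g1 x0 - g2 x0 <= 0) by lra. apply Rmult_le_0_r; lra.
    - unfold f. apply (rc_mult (fun x => g1 x - g2 x) (fun x => exp (- K * x))).
      + apply (rc_minus g1 g2); assumption.
      + apply (rc_cont_der (fun x => exp (- K * x)) x0 (- K * exp (- K * x0))). apply der_expK.
    - intros x Hx Hfx. unfold df.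
      assert (He : 0 < exp (- K * x)) by apply exp_pos.
      unfold f in Hfx.
      assert (Hw : 0 < g1 x - g2 x).
      { destruct (Rle_or_lt (g1 x - g2 x) 0) as [Hn|Hp]; [|exact Hp].
        assert ((g1 x - g2 x) * exp (- K * x) <= 0) by (apply Rmult_le_0_r; lra). lra. }
      assert (Hg1x : mu <= g1 x) by (eapply Rle_trans; [exact Hmu1|apply Hb1; lra]).
      assert (Hg2x : mu <= g2 x) by (eapply Rle_trans; [exact Hmu2|apply Hb2; lra]).
      assert (HPx : 0 < P x) by (apply HP; lra).
      assert (HPxX : P x <= P X) by (destruct (Req_dec x X) as [->|Hne]; [lra|left; apply Hinc; lra]).
      set (b := 1 / (s * x) + P x / (s * x * (g1 x * g2 x))).
      replace ((rhs s P x (g1 x) - rhs s P x (g2 x)) * exp (- K * x) + (g1 x - g2 x) * (- K * exp (- K * x)))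
        with (exp (- K * x) * (g1 x - g2 x) * (b - K)).
      2:{ unfold b, rhs. field. repeat split; lra. }
      assert (Hb : b <= K).
      { unfold b, K. apply Rplus_le_compat.
        - apply frac_le; try lra. apply Rmult_lt_0_compat; lra. apply Rmult_le_compat_l; lra.
        - apply frac_le; try lra.
          + apply Rmult_lt_0_compat; [apply Rmult_lt_0_compat; lra|apply Rmult_lt_0_compat; lra].
          + apply Rmult_le_compat; try lra.
            * apply Rmult_le_pos; lra.
            * apply Rmult_le_pos; lra.
            * apply Rmult_le_compat_l; lra.
            * apply Rmult_le_compat; lra. }
      assert (0 <= exp (- K * x) * (g1 x - g2 x)) by (apply Rmult_le_pos; lra).
      assert (b - K <= 0) by lra.
      apply Rmult_le_0_l; lra. }
  unfold f in Hres. assert (0 < exp (- K * X)) by apply exp_pos.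
  destruct (Rle_or_lt (g1 X) (g2 X)) as [Hq|Hq]; [exact Hq|].
  assert (0 < (g1 X - g2 X) * exp (- K * X)) by (apply Rmult_lt_0_compat; lra). lra.
Qed.


Lemma rc_sol s P x0 v : gs s P x0 v -> forall y, x0 <= y -> rc v y.
Proof.
  intros [Hpos [Hrc Hder]] y Hy. destruct (Req_dec y x0) as [->|Hne]; [exact Hrc|].
  apply (rc_cont_der v y (rhs s P y (v y))). apply Hder; lra.
Qed.

Lemma L5 s P x0 v : 0 < s -> 0 < x0 -> C2_on_nonneg P -> Pinc P -> (forall x, 0 < x -> 0 < P x) ->
  gs s P x0 v -> forall y, x0 <= y -> P y < v y + v y * v y.
Proof.
  intros Hs Hx0 HC2 Hinc HP Hv y Hy.
  destruct (P_der_ex P HC2 Hinc) as [dP [HdP HdP0]].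
  assert (Hrcv := rc_sol s P x0 v Hv).
  destruct Hv as [Hpos [Hrc Hder]].
  destruct (Rlt_or_le (P y) (v y + v y * v y)) as [H|Hneg]; [exact H|exfalso].
  assert (HPx0 : 0 < P x0) by (apply HP; lra).
  set (ka := Rmin 1 (P x0 / 2)).
  assert (Hka0 : 0 < ka) by (apply Rmin_glb_lt; lra).
  assert (Hka1 : ka <= 1) by apply Rmin_l.
  assert (Hka2 : ka <= P x0 / 2) by apply Rmin_r.
  assert (HPmono : forall a b, x0 <= a -> a <= b -> P a <= P b).
  { intros a b Ha Hab. destruct (Req_dec a b) as [->|Hne]; [lra|left; apply Hinc; lra]. }
  set (N := fun x => v x + v x * v x - P x).
  set (dN := fun x => rhs s P x (v x) + (rhs s P x (v x) * v x + v x * rhs s P x (v x)) - dP x).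
  assert (HdN : forall x, x0 < x -> is_derive N x (dN x)).
  { intros x Hx. apply (der_minus (fun x => v x + v x * v x) P).
    - apply (der_plus v (fun x => v x * v x)); [apply Hder; exact Hx|].
      apply (der_mult v v); apply Hder; exact Hx.
    - apply HdP; lra. }
  assert (HrcN : forall z, x0 <= z -> rc N z).
  { intros z Hz. apply (rc_minus (fun x => v x + v x * v x) P).
    - apply (rc_plus v (fun x => v x * v x)); [apply Hrcv; exact Hz|].
      apply (rc_mult v v); apply Hrcv; exact Hz.
    - apply (rc_cont_der P z (dP z)). apply HdP; lra. }
  set (K := (1 / ka + 2) / (s * x0)).
  assert (HA : forall z, y <= z -> N z <= 0).
  { intros z Hz.
    set (f := fun x => N x * exp (- K * x)).
    set (df := fun x => dN x * exp (- K * x) + N x * (- K * exp (- K * x))).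
    assert (Hd : forall x, x0 < x -> is_derive f x (df x)).
    { intros x Hx. apply (der_mult N (fun x => exp (- K * x))); [apply HdN; exact Hx|apply der_expK]. }
    assert (Hres : f z <= 0).
    { apply (sign_pres f df y z Hz); [ | | intros x Hx; apply Hd; lra | | lra ].
      - unfold f. assert (0 < exp (- K * y)) by apply exp_pos. unfold N. apply Rmult_le_0_r; lra.
      - apply (rc_mult N (fun x => exp (- K * x))); [apply HrcN; lra|].
        apply (rc_cont_der (fun x => exp (- K * x)) y (- K * exp (- K * y))). apply der_expK.
      - intros x Hx Hfx.
        assert (He : 0 < exp (- K * x)) by apply exp_pos.
        assert (HNx : 0 < N x).
        { unfold f in Hfx. destruct (Rle_or_lt (N x) 0) as [Hn|Hp]; [|exact Hp].
          assert (N x * exp (- K * x) <= 0) by (apply Rmult_le_0_r; lra). lra. }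
        assert (Hvx : 0 < v x) by (apply Hpos; lra).
        assert (HPx : P x0 <= P x) by (apply HPmono; lra).
        assert (Hvk : ka < v x).
        { destruct (Rle_or_lt (v x) ka) as [Hle|Hlt]; [|exact Hlt].
          exfalso. unfold N in HNx. assert (v x * v x <= ka * ka) by (apply Rmult_le_compat; lra).
          assert (ka * ka <= ka) by (rewrite <- (Rmult_1_r ka) at 3; apply Rmult_le_compat_l; lra).
          lra. }
        assert (HdPx : 0 <= dP x) by (apply HdP0; lra).
        unfold df, dN.
        replace (rhs s P x (v x) + (rhs s P x (v x) * v x + v x * rhs s P x (v x)) - dP x)
          with (N x * ((1 / v x + 2) / (s * x)) - dP x).
        2:{ unfold N, rhs. field. repeat split; lra. }
        assert (Hc : (1 / v x + 2) / (s * x) <= K).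
        { unfold K. apply frac_le.
          - assert (0 < 1 / v x) by (apply Rdiv_lt_0_compat; lra). lra.
          - apply Rplus_le_compat_r. apply frac_le; lra.
          - apply Rmult_lt_0_compat; lra.
          - apply Rmult_le_compat_l; lra. }
        replace ((N x * ((1 / v x + 2) / (s * x)) - dP x) * exp (- K * x) + N x * (- K * exp (- K * x)))
          with (exp (- K * x) * (N x * ((1 / v x + 2) / (s * x) - K) - dP x)) by ring.
        assert (N x * ((1 / v x + 2) / (s * x) - K) <= 0) by (apply Rmult_le_0_l; lra).
        apply Rmult_le_0_l; lra. }
    unfold f in Hres. assert (0 < exp (- K * z)) by apply exp_pos.
    destruct (Rle_or_lt (N z) 0) as [Hq|Hq]; [exact Hq|].
    assert (0 < N z * exp (- K * z)) by (apply Rmult_lt_0_compat; lra). lra. }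
  assert (HB : forall z, y <= z -> v z <= v y).
  { intros z Hz. destruct (Req_dec z y) as [->|Hne]; [lra|].
    apply (mono_core_dec v (fun x => rhs s P x (v x)) y z); [lra|apply Hrcv; lra|intros; apply Hder; lra|].
    intros x Hx. assert (HNx := HA x ltac:(lra)). unfold N in HNx.
    assert (Hvx : 0 < v x) by (apply Hpos; lra). unfold rhs.
    apply Rmult_le_0_r; [|left; apply Rinv_0_lt_compat; apply Rmult_lt_0_compat; [apply Rmult_lt_0_compat|]; lra].
    replace (v x + v x ^ 2 - P x) with (v x + v x * v x - P x) by ring. lra. }
  set (k2 := P (y + 1) - P y).
  assert (Hk2 : 0 < k2) by (unfold k2; assert (P y < P (y + 1)) by (apply Hinc; lra); lra).
  assert (HC : forall z, y + 1 <= z -> N z <= - k2).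
  { intros z Hz. assert (Hvz := HB z ltac:(lra)). assert (Hvz0 : 0 < v z) by (apply Hpos; lra).
    assert (HPz : P (y + 1) <= P z) by (apply HPmono; lra).
    assert (v z * v z <= v y * v y) by (apply Rmult_le_compat; lra).
    unfold N, k2. lra. }
  set (y1 := y + 1).
  set (Phi := fun x => v x * v x + (2 * k2 / s) * ln x).
  set (dPhi := fun x => (rhs s P x (v x) * v x + v x * rhs s P x (v x)) + (2 * k2 / s) * / x).
  assert (HD : forall z, y1 <= z -> Phi z <= Phi y1).
  { intros z Hz. destruct (Req_dec z y1) as [->|Hne]; [lra|].
    apply (mono_core_dec Phi dPhi y1 z); [lra| | |].
    - apply (rc_cont_der Phi y1 (dPhi y1)).
      apply (der_plus (fun x => v x * v x) (fun x => 2 * k2 / s * ln x)).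
      + apply (der_mult v v); apply Hder; unfold y1; lra.
      + apply is_derive_Reals. apply derivable_pt_lim_scal. apply is_derive_Reals. apply der_ln. unfold y1; lra.
    - intros x Hx. apply (der_plus (fun x => v x * v x) (fun x => 2 * k2 / s * ln x)).
      + apply (der_mult v v); apply Hder; unfold y1 in Hx; lra.
      + apply is_derive_Reals. apply derivable_pt_lim_scal. apply is_derive_Reals. apply der_ln. unfold y1 in Hx; lra.
    - intros x Hx. unfold dPhi.
      assert (Hvx : 0 < v x) by (apply Hpos; unfold y1 in Hx; lra).
      assert (HNx := HC x ltac:(unfold y1 in Hx; lra)).
      replace (rhs s P x (v x) * v x + v x * rhs s P x (v x) + 2 * k2 / s * / x)
        with (2 * (N x + k2) / (s * x)).
      2:{ unfold N, rhs. field. unfold y1 in Hx. repeat split; lra. }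
      apply Rmult_le_0_r; [lra|]. left; apply Rinv_0_lt_compat. apply Rmult_lt_0_compat; unfold y1 in Hx; lra. }
  set (w := v y1 * v y1).
  set (z := y1 * exp (s * w / (2 * k2) + 1)).
  assert (Hy1 : 0 < y1) by (unfold y1; lra).
  assert (Hz : y1 <= z).
  { unfold z. assert (1 <= exp (s * w / (2 * k2) + 1)).
    { apply Rle_trans with (exp 0); [rewrite exp_0; lra|]. apply exp_le_. unfold w.
      assert (0 <= s * (v y1 * v y1) / (2 * k2)).
      { apply Rmult_le_pos; [apply Rmult_le_pos; [lra|apply Rle_0_sqr]|left; apply Rinv_0_lt_compat; lra]. }
      lra. }
    rewrite <- (Rmult_1_r y1) at 1. apply Rmult_le_compat_l; lra. }
  specialize (HD z Hz). unfold Phi in HD.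
  assert (Hlnz : ln z = ln y1 + (s * w / (2 * k2) + 1)).
  { unfold z. rewrite ln_mult; [rewrite ln_exp; reflexivity|lra|apply exp_pos]. }
  rewrite Hlnz in HD. fold w in HD.
  assert (Hsq : 0 <= v z * v z) by apply Rle_0_sqr.
  replace (2 * k2 / s * (ln y1 + (s * w / (2 * k2) + 1))) with (2 * k2 / s * ln y1 + w + 2 * k2 / s) in HD
    by (field; lra).
  assert (0 < 2 * k2 / s) by (apply Rdiv_lt_0_compat; lra).
  lra.
Qed.


Lemma cp_plus f g x : continuity_pt f x -> continuity_pt g x -> continuity_pt (fun u => f u + g u) x.
Proof. intros H1 H2. exact (continuity_pt_plus f g x H1 H2). Qed.
Lemma cp_minus f g x : continuity_pt f x -> continuity_pt g x -> continuity_pt (fun u => f u - g u) x.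
Proof. intros H1 H2. exact (continuity_pt_minus f g x H1 H2). Qed.
Lemma cp_mult f g x : continuity_pt f x -> continuity_pt g x -> continuity_pt (fun u => f u * g u) x.
Proof. intros H1 H2. exact (continuity_pt_mult f g x H1 H2). Qed.
Lemma cp_div f g x : continuity_pt f x -> continuity_pt g x -> g x <> 0 -> continuity_pt (fun u => f u / g u) x.
Proof. intros H1 H2 H3. exact (continuity_pt_div f g x H1 H2 H3). Qed.
Lemma cp_comp f g x : continuity_pt f x -> continuity_pt g (f x) -> continuity_pt (fun u => g (f u)) x.
Proof. intros H1 H2. exact (continuity_pt_comp f g x H1 H2). Qed.
Lemma cp_const c x : continuity_pt (fun _ => c) x.
Proof. apply continuity_pt_const. intros u v; reflexivity. Qed.

Lemma Rmax_abs a b : Rmax a b = (a + b + Rabs (a - b)) / 2.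
Proof.
  unfold Rmax. destruct (Rle_dec a b).
  - rewrite Rabs_left1 by lra. field.
  - rewrite Rabs_right by lra. field.
Qed.

Lemma cp_max f g x : continuity_pt f x -> continuity_pt g x -> continuity_pt (fun u => Rmax (f u) (g u)) x.
Proof.
  intros H1 H2.
  apply continuity_pt_ext with (f := fun u => (f u + g u + Rabs (f u - g u)) / 2).
  { intros u; symmetry; apply Rmax_abs. }
  apply cp_div; [| apply cp_const | lra].
  apply cp_plus; [apply cp_plus; assumption|].
  apply (cp_comp (fun u => f u - g u) Rabs); [apply cp_minus; assumption|apply Rcontinuity_abs].
Qed.

Lemma Rmax_lip y1 y2 a : Rabs (Rmax y1 a - Rmax y2 a) <= Rabs (y1 - y2).
Proof.
  unfold Rmax. destruct (Rle_dec y1 a); destruct (Rle_dec y2 a);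
    apply Rabs_le; assert (H := Rle_abs (y1 - y2)); assert (H' := Rabs_maj2 (y1 - y2)); lra.
Qed.

Definition Gf s P x0 a t y :=
  (1 + y) / (s * Rmax t x0) - P (Rmax t x0) / (s * Rmax t x0 * Rmax y a).

Lemma Gf_eq s P x0 a t y : 0 < s -> x0 <= t -> 0 < x0 -> a <= y -> 0 < a ->
  Gf s P x0 a t y = rhs s P t y.
Proof.
  intros Hs Ht Hx0 Hy Ha. unfold Gf. rewrite Rmax_left by lra. rewrite Rmax_left by lra.
  unfold rhs. field. repeat split; lra.
Qed.

Lemma Gf_lip s P x0 a Pb : 0 < s -> 0 < x0 -> 0 < a ->
  (forall t, x0 <= t -> 0 < P t <= Pb) ->
  Lip (Gf s P x0 a) (1 / (s * x0) + Pb / (s * x0 * (a * a))).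
Proof.
  intros Hs Hx0 Ha HPb t y1 y2. unfold Gf.
  set (T := Rmax t x0). assert (HT : x0 <= T) by apply Rmax_r.
  set (M1 := Rmax y1 a). set (M2 := Rmax y2 a).
  assert (HM1 : a <= M1) by apply Rmax_r. assert (HM2 : a <= M2) by apply Rmax_r.
  assert (HL := Rmax_lip y1 y2 a). fold M1 M2 in HL.
  destruct (HPb T HT) as [HP1 HP2].
  replace ((1 + y1) / (s * T) - P T / (s * T * M1) - ((1 + y2) / (s * T) - P T / (s * T * M2)))
    with ((y1 - y2) * (1 / (s * T)) + (M1 - M2) * (P T / (s * T * (M1 * M2)))).
  2:{ field. repeat split; lra. }
  eapply Rle_trans; [apply Rabs_triang|]. rewrite !Rabs_mult.
  rewrite (Rabs_right (1 / (s * T))) by (left; apply Rdiv_lt_0_compat; [lra|apply Rmult_lt_0_compat; lra]).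
  rewrite (Rabs_right (P T / (s * T * (M1 * M2)))).
  2:{ left; apply Rdiv_lt_0_compat; [lra|]. apply Rmult_lt_0_compat; [apply Rmult_lt_0_compat; lra|apply Rmult_lt_0_compat; lra]. }
  rewrite Rmult_plus_distr_r.
  assert (Habs : 0 <= Rabs (y1 - y2)) by apply Rabs_pos.
  apply Rplus_le_compat.
  - rewrite Rmult_comm. apply Rmult_le_compat_r; [exact Habs|].
    apply frac_le; try lra. apply Rmult_lt_0_compat; lra. apply Rmult_le_compat_l; lra.
  - rewrite Rmult_comm. apply Rmult_le_compat; [|apply Rabs_pos| |exact HL].
    + left; apply Rdiv_lt_0_compat; [lra|]. apply Rmult_lt_0_compat; [apply Rmult_lt_0_compat; lra|apply Rmult_lt_0_compat; lra].
    + apply frac_le; try lra.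
      * apply Rmult_lt_0_compat; [apply Rmult_lt_0_compat; lra|apply Rmult_lt_0_compat; lra].
      * apply Rmult_le_compat; try lra.
        -- apply Rmult_le_pos; lra.
        -- apply Rmult_le_pos; lra.
        -- apply Rmult_le_compat_l; lra.
        -- apply Rmult_le_compat; lra.
Qed.

Lemma Gf_bound s P x0 a Pb c : 0 < s -> 0 < x0 -> 0 < a ->
  (forall t, x0 <= t -> 0 < P t <= Pb) ->
  forall t, Rabs (Gf s P x0 a t c) <= Rabs (1 + c) / (s * x0) + Pb / (s * x0 * a).
Proof.
  intros Hs Hx0 Ha HPb t. unfold Gf.
  set (T := Rmax t x0). assert (HT : x0 <= T) by apply Rmax_r.
  set (M1 := Rmax c a). assert (HM1 : a <= M1) by apply Rmax_r.
  destruct (HPb T HT) as [HP1 HP2].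
  unfold Rminus. eapply Rle_trans; [apply Rabs_triang|]. rewrite Rabs_Ropp.
  apply Rplus_le_compat.
  - unfold Rdiv. rewrite Rabs_mult. apply Rmult_le_compat_l; [apply Rabs_pos|].
    rewrite Rabs_right by (left; apply Rinv_0_lt_compat; apply Rmult_lt_0_compat; lra).
    apply Rinv_le_contravar; [apply Rmult_lt_0_compat; lra|]. apply Rmult_le_compat_l; lra.
  - rewrite Rabs_right.
    + apply frac_le; try lra.
      * apply Rmult_lt_0_compat; [apply Rmult_lt_0_compat|]; lra.
      * apply Rmult_le_compat; try lra. apply Rmult_le_pos; lra. apply Rmult_le_compat_l; lra.
    + left; apply Rdiv_lt_0_compat; [lra|]. apply Rmult_lt_0_compat; [apply Rmult_lt_0_compat|]; lra.
Qed.

Lemma Gf_cont s P x0 a : 0 < s -> 0 < x0 -> 0 < a ->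
  (forall t, 0 < t -> continuity_pt P t) -> Gcont (Gf s P x0 a).
Proof.
  intros Hs Hx0 Ha HPc phi Hphi t. unfold Gf.
  assert (HT : continuity_pt (fun u => Rmax u x0) t) by (apply cp_max; [apply continuity_pt_id|apply cp_const]).
  assert (HT0 : x0 <= Rmax t x0) by apply Rmax_r.
  assert (HM : a <= Rmax (phi t) a) by apply Rmax_r.
  apply cp_minus.
  - apply cp_div.
    + apply cp_plus; [apply cp_const|apply Hphi].
    + apply cp_mult; [apply cp_const|exact HT].
    + apply Rgt_not_eq. apply Rmult_lt_0_compat; lra.
  - apply cp_div.
    + apply (cp_comp (fun u => Rmax u x0) P); [exact HT|]. apply HPc. lra.
    + apply cp_mult; [apply cp_mult; [apply cp_const|exact HT]|].
      apply cp_max; [apply Hphi|apply cp_const].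
    + apply Rgt_not_eq. apply Rmult_lt_0_compat; [apply Rmult_lt_0_compat|]; lra.
Qed.


Lemma absle x y : Rabs x <= y -> - y <= x <= y.
Proof. intros H. assert (H1 := Rle_abs x). assert (H2 := Rabs_maj2 x). lra. Qed.

Lemma rhs_pos s P t g : 0 < s -> 0 < t -> 0 < g -> P t < g + g * g -> 0 < rhs s P t g.
Proof.
  intros Hs Ht Hg H. unfold rhs. apply Rdiv_lt_0_compat.
  - replace (g ^ 2) with (g * g) by ring. lra.
  - apply Rmult_lt_0_compat; [apply Rmult_lt_0_compat|]; lra.
Qed.

Lemma L6 s P x0 v : 0 < s -> 0 < x0 -> C2_on_nonneg P -> Pinc P -> (forall x, 0 < x -> 0 < P x) ->
  gs s P x0 v -> (forall g, gs s P x0 g -> v x0 <= g x0) ->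
  forall x, x0 <= x -> exists Y, x0 <= Y /\ v x + v x * v x <= P Y.
Proof.
  intros Hs Hx0 HC2 Hinc HP Hv Hmin x Hx.
  destruct (classic (exists Y, x0 <= Y /\ v x + v x * v x <= P Y)) as [H|Hno]; [exact H|exfalso].
  set (m := v x).
  assert (HPb : forall Y, x0 <= Y -> P Y < m + m * m).
  { intros Y HY. destruct (Rlt_or_le (P Y) (m + m * m)) as [H|H]; [exact H|].
    exfalso; apply Hno; exists Y; split; [exact HY|exact H]. }
  destruct (P_der_ex P HC2 Hinc) as [dP [HdP HdP0]].
  assert (HPc : forall t, 0 < t -> continuity_pt P t) by (intros t Ht; apply der_ctp with (dP t); apply HdP; exact Ht).
  assert (HN := L5 s P x0 v Hs Hx0 HC2 Hinc HP Hv).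
  assert (Hrcv := rc_sol s P x0 v Hv).
  destruct Hv as [Hvpos [Hvrc Hvder]].
  assert (HPx0 : 0 < P x0) by (apply HP; lra).
  assert (HPmono : forall a b, x0 <= a -> a <= b -> P a <= P b).
  { intros a b Ha Hab. destruct (Req_dec a b) as [->|Hne]; [lra|left; apply Hinc; lra]. }
  set (ka := Rmin 1 (P x0 / 2)).
  assert (Hka0 : 0 < ka) by (apply Rmin_glb_lt; lra).
  assert (Hka1 : ka <= 1) by apply Rmin_l.
  assert (Hka2 : ka <= P x0 / 2) by apply Rmin_r.
  assert (Hvka : forall t, x0 <= t -> ka < v t).
  { intros t Ht. destruct (Rle_or_lt (v t) ka) as [Hle|Hlt]; [|exact Hlt]. exfalso.
    assert (H1 := HN t Ht). assert (H2 := HPmono x0 t ltac:(lra) Ht).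
    assert (Hvt : 0 < v t) by (apply Hvpos; exact Ht).
    assert (v t * v t <= ka * ka) by (apply Rmult_le_compat; lra).
    assert (ka * ka <= ka) by (rewrite <- (Rmult_1_r ka) at 3; apply Rmult_le_compat_l; lra).
    lra. }
  set (a := ka / 2).
  assert (Ha0 : 0 < a) by (unfold a; lra).
  assert (Hm : ka < m) by (apply Hvka; exact Hx).
  set (Pb := m + m * m).
  assert (HPb' : forall t, x0 <= t -> 0 < P t <= Pb).
  { intros t Ht. split; [apply HP; lra|]. left; apply HPb; exact Ht. }
  set (K := 1 / (s * x0) + Pb / (s * x0 * (a * a))).
  assert (HK : 0 <= K).
  { unfold K. assert (0 < 1 / (s * x0)) by (apply Rdiv_lt_0_compat; [lra|apply Rmult_lt_0_compat; lra]).
    assert (0 < Pb / (s * x0 * (a * a))).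
    { apply Rdiv_lt_0_compat; [unfold Pb; nra|]. apply Rmult_lt_0_compat; [apply Rmult_lt_0_compat|apply Rmult_lt_0_compat]; lra. }
    lra. }
  assert (HL : Lip (Gf s P x0 a) K) by (apply Gf_lip; assumption).
  assert (HGc : Gcont (Gf s P x0 a)) by (apply Gf_cont; assumption).
  assert (Hrhsv : forall t, x0 < t -> 0 < rhs s P t (v t)).
  { intros t Ht. apply rhs_pos; try lra; [apply Hvpos; lra|apply HN; lra]. }
  set (x1 := x + 1).
  assert (Hvx1 : m < v x1).
  { assert (Hhalf : v x <= v (x + /2)).
    { apply (mono_core v (fun t => rhs s P t (v t)) x (x + /2)); [lra|apply Hrcv; lra| |].
      - intros t Ht; apply Hvder; lra.
      - intros t Ht; left; apply Hrhsv; lra. }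
    destruct (MVT_gen v (x + /2) x1 (fun t => rhs s P t (v t))) as [xi [Hxi Heq]].
    - intros t Ht. rewrite Rmin_left in Ht by (unfold x1; lra). rewrite Rmax_right in Ht by (unfold x1; lra).
      apply Hvder; lra.
    - intros t Ht. rewrite Rmin_left in Ht by (unfold x1; lra). rewrite Rmax_right in Ht by (unfold x1; lra).
      apply der_ctp with (rhs s P t (v t)). apply Hvder; lra.
    - rewrite Rmin_left in Hxi by (unfold x1; lra). rewrite Rmax_right in Hxi by (unfold x1; lra).
      assert (Hr := Hrhsv xi ltac:(lra)).
      assert (0 < rhs s P xi (v xi) * (x1 - (x + /2))) by (apply Rmult_lt_0_compat; unfold x1; lra).
      unfold m. lra. }
  set (dm := v x1 - m).
  set (kr := Rmin a dm).
  assert (Hkr0 : 0 < kr) by (apply Rmin_glb_lt; unfold dm; lra).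
  assert (Hkr1 : kr <= a) by apply Rmin_l.
  assert (Hkr2 : kr <= dm) by apply Rmin_r.
  set (EK := exp (K * (x1 - x0))).
  assert (HEK : 0 < EK) by apply exp_pos.
  set (eta := kr / (2 * EK)).
  assert (Heta : 0 < eta) by (apply Rdiv_lt_0_compat; lra).
  set (c := v x0 - eta).
  set (M := Rabs (1 + c) / (s * x0) + Pb / (s * x0 * a)).
  assert (HM : 0 <= M).
  { unfold M. assert (0 <= Rabs (1 + c) / (s * x0)).
    { apply Rmult_le_pos; [apply Rabs_pos|left; apply Rinv_0_lt_compat; apply Rmult_lt_0_compat; lra]. }
    assert (0 < Pb / (s * x0 * a)).
    { apply Rdiv_lt_0_compat; [unfold Pb; nra|]. apply Rmult_lt_0_compat; [apply Rmult_lt_0_compat|]; lra. }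
    lra. }
  assert (HGM : forall t, Rabs (Gf s P x0 a t c) <= M) by (intros t; apply Gf_bound; assumption).
  destruct (picard_exists (Gf s P x0 a) x0 c K M HGc HK HM HL HGM) as [Hh0 [Hhrc Hhder]].
  set (h := hsol (Gf s P x0 a) x0 c) in *.
  assert (HvG : forall t, x0 < t -> rhs s P t (v t) = Gf s P x0 a t (v t)).
  { intros t Ht. symmetry. apply Gf_eq; try lra. assert (H := Hvka t ltac:(lra)). unfold a; lra. }
  assert (HGr : forall t, x0 <= t -> (h t - v t) * (h t - v t) * exp (- (2 * K) * t) <= eta * eta * exp (- (2 * K) * x0)).
  { intros t Ht.
    set (E := fun t => (h t - v t) * (h t - v t) * exp (- (2 * K) * t)).
    set (dd := fun t => Gf s P x0 a t (h t) - rhs s P t (v t)).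
    set (dE := fun t => (dd t * (h t - v t) + (h t - v t) * dd t) * exp (- (2 * K) * t)
                        + (h t - v t) * (h t - v t) * (- (2 * K) * exp (- (2 * K) * t))).
    assert (HE0 : E x0 = eta * eta * exp (- (2 * K) * x0)).
    { unfold E. rewrite Hh0. unfold c. replace (v x0 - eta - v x0) with (- eta) by ring. ring_simplify. reflexivity. }
    change (E t <= eta * eta * exp (- (2 * K) * x0)). rewrite <- HE0.
    destruct (Req_dec t x0) as [->|Hne]; [lra|].
    apply (mono_core_dec E dE x0 t); [lra| | |].
    - unfold E. apply (rc_mult (fun t => (h t - v t) * (h t - v t)) (fun t => exp (- (2 * K) * t))).
      + assert (Hrh : rc h x0) by (unfold rc; rewrite Hh0; exact Hhrc).
        apply (rc_mult (fun t => h t - v t) (fun t => h t - v t)); apply (rc_minus h v); auto; apply Hrcv; lra.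
      + apply (rc_cont_der (fun t => exp (- (2 * K) * t)) x0 (- (2 * K) * exp (- (2 * K) * x0))). apply der_expK.
    - intros u Hu. unfold E, dE.
      apply (der_mult (fun t => (h t - v t) * (h t - v t)) (fun t => exp (- (2 * K) * t))); [|apply der_expK].
      apply (der_mult (fun t => h t - v t) (fun t => h t - v t)); apply (der_minus h v);
        [apply Hhder; lra|apply Hvder; lra|apply Hhder; lra|apply Hvder; lra].
    - intros u Hu. unfold dE, dd.
      rewrite (HvG u ltac:(lra)).
      set (w := h u - v u). set (g := Gf s P x0 a u (h u) - Gf s P x0 a u (v u)).
      assert (Hlip : Rabs g <= K * Rabs w) by (unfold g, w; apply HL).
      assert (Hwg : w * g <= K * (w * w)).
      { assert (w * g <= Rabs (w * g)) by apply Rle_abs. rewrite Rabs_mult in H.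
        assert (Rabs w * Rabs g <= Rabs w * (K * Rabs w)) by (apply Rmult_le_compat_l; [apply Rabs_pos|exact Hlip]).
        assert (Rabs w * Rabs w = w * w) by (rewrite <- Rabs_mult; apply Rabs_right; apply Rle_ge; apply Rle_0_sqr).
        nra. }
      assert (He : 0 < exp (- (2 * K) * u)) by apply exp_pos.
      replace ((g * w + w * g) * exp (- (2 * K) * u) + w * w * (- (2 * K) * exp (- (2 * K) * u)))
        with (2 * exp (- (2 * K) * u) * (w * g - K * (w * w))) by ring.
      apply Rmult_le_0_l; [lra|lra]. }
  assert (Hclose : forall t, x0 <= t -> Rabs (h t - v t) <= eta * exp (K * (t - x0))).
  { intros t Ht. specialize (HGr t Ht).
    set (w := h t - v t) in *. set (B := eta * exp (K * (t - x0))).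
    assert (HB0 : 0 <= B) by (unfold B; apply Rmult_le_pos; [lra|left; apply exp_pos]).
    assert (Hww : w * w <= B * B).
    { assert (Hx2 : exp (- (2 * K) * t) * exp (2 * K * t) = 1) by (rewrite <- exp_plus; replace (- (2 * K) * t + 2 * K * t) with 0 by ring; apply exp_0).
      assert (HB2 : B * B = eta * eta * exp (- (2 * K) * x0) * exp (2 * K * t)).
      { unfold B. rewrite (Rmult_assoc (eta * eta)). rewrite <- exp_plus.
        replace (- (2 * K) * x0 + 2 * K * t) with (K * (t - x0) + K * (t - x0)) by ring.
        rewrite exp_plus. ring. }
      rewrite HB2.
      assert (Hp : 0 < exp (2 * K * t)) by apply exp_pos.
      replace (w * w) with (w * w * exp (- (2 * K) * t) * exp (2 * K * t)) by (rewrite Rmult_assoc, Hx2; ring).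
      apply Rmult_le_compat_r; lra. }
    apply Rabs_le. split; nra. }
  assert (Hclose1 : forall t, x0 <= t <= x1 -> Rabs (h t - v t) <= kr / 2).
  { intros t Ht. eapply Rle_trans; [apply Hclose; lra|].
    assert (exp (K * (t - x0)) <= EK) by (unfold EK; apply exp_le_; apply Rmult_le_compat_l; lra).
    replace (kr / 2) with (eta * EK) by (unfold eta; field; lra).
    apply Rmult_le_compat_l; lra. }
  assert (Hh1 : forall t, x0 <= t <= x1 -> a < h t).
  { intros t Ht. assert (H1 := Hclose1 t Ht). apply absle in H1.
    assert (H2 := Hvka t ltac:(lra)). unfold a in *. lra. }
  set (m2 := (m + h x1) / 2).
  assert (Hhx1 : m < h x1).
  { assert (H1 := Hclose1 x1 ltac:(unfold x1; lra)). apply absle in H1. unfold dm in Hkr2. lra. }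
  assert (Hma : a < m) by (unfold a; lra).
  assert (Hh2 : forall t, x1 <= t -> m2 <= h t).
  { intros t Ht.
    assert (Hb := barrier (fun u => - h u) (fun u => - Gf s P x0 a u (h u)) x1 t (- m2) (- m2 - 1) (- m) Ht).
    assert (- h t <= - m2); [|lra].
    apply Hb; [unfold m2; lra|unfold m2; lra| | | |lra].
    - apply (rc_cont_der (fun u => - h u) x1 (- Gf s P x0 a x1 (h x1))).
      apply (is_derive_opp h). apply Hhder. unfold x1; lra.
    - intros u Hu. apply (is_derive_opp h). apply Hhder. unfold x1 in Hu; lra.
    - intros u Hu Hband.
      assert (Hhu : m < h u) by lra.
      rewrite Gf_eq; try lra; [|unfold x1 in Hu; lra].
      assert (0 < rhs s P u (h u)).
      { apply rhs_pos; try lra. unfold x1 in Hu; lra.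
        assert (H1 := HPb u ltac:(unfold x1 in Hu; lra)).
        assert (m * m < h u * h u) by nra. lra. }
      lra. }
  assert (Hha : forall t, x0 <= t -> a < h t).
  { intros t Ht. destruct (Rle_or_lt t x1) as [H|H].
    - apply Hh1; lra.
    - assert (H2 := Hh2 t ltac:(lra)). unfold m2 in H2. lra. }
  assert (Hgs : gs s P x0 h).
  { split; [intros t Ht; assert (H := Hha t Ht); lra|]. split.
    - rewrite Hh0. exact Hhrc.
    - intros t Ht. rewrite <- (Gf_eq s P x0 a t (h t)); try lra.
      + apply Hhder; exact Ht.
      + left; apply Hha; lra. }
  assert (H := Hmin h Hgs). rewrite Hh0 in H. unfold c in H. lra.
Qed.


Lemma gc_lt v p : 0 <= v -> 0 <= p -> p < v + v * v -> (sqrt (1 + 4 * p) - 1) / 2 < v.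
Proof.
  intros Hv Hp H. assert (HS := sqrt_pos (1 + 4 * p)).
  assert (HS2 := sqrt_sqrt (1 + 4 * p) ltac:(lra)).
  set (S := sqrt (1 + 4 * p)) in *.
  destruct (Rlt_or_le ((S - 1) / 2) v) as [Hq|Hq]; [exact Hq|exfalso].
  assert (2 * v + 1 <= S) by lra. nra.
Qed.

Lemma gc_ge v p : 0 <= v -> v + v * v <= p -> v <= (sqrt (1 + 4 * p) - 1) / 2.
Proof.
  intros Hv H. assert (Hp : 0 <= p) by nra. assert (HS := sqrt_pos (1 + 4 * p)).
  assert (HS2 := sqrt_sqrt (1 + 4 * p) ltac:(lra)).
  set (S := sqrt (1 + 4 * p)) in *.
  destruct (Rle_or_lt v ((S - 1) / 2)) as [Hq|Hq]; [exact Hq|exfalso].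
  assert (S < 2 * v + 1) by lra. nra.
Qed.

Lemma gc_mono p q : p <= q -> (sqrt (1 + 4 * p) - 1) / 2 <= (sqrt (1 + 4 * q) - 1) / 2.
Proof. intros H. assert (sqrt (1 + 4 * p) <= sqrt (1 + 4 * q)) by (apply sqrt_le_1_alt; lra). lra. Qed.

Lemma Rpow_mono s a b : 0 < s -> 0 < a -> a <= b -> Rpower a (1 / s) <= Rpower b (1 / s).
Proof.
  intros Hs Ha Hab. unfold Rpower. apply exp_le_. apply Rmult_le_compat_l.
  - left; apply Rdiv_lt_0_compat; lra.
  - apply ln_le_; lra.
Qed.

Lemma Rpow_pos s a : 0 < Rpower a (1 / s).
Proof. unfold Rpower. apply exp_pos. Qed.

Lemma part1 s P x0 v : 0 < s -> 0 < x0 -> Pinc P -> (forall x, 0 < x -> 0 < P x) -> gs s P x0 v ->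
  forall g, gs s P x0 g -> v x0 < g x0 ->
  exists C1 C2, 0 < C1 /\ C1 < C2 /\ exists X, forall x, X <= x ->
    C1 * Rpower x (1 / s) <= g x /\ g x <= C2 * Rpower x (1 / s).
Proof.
  intros Hs Hx0 Hinc HP Hv g Hg Hlt.
  assert (Hle := L3 s P x0 v g Hs Hx0 Hinc HP Hv Hg ltac:(lra)).
  assert (Hrcw : rc (fun x => g x - v x) x0).
  { apply (rc_minus g v); [destruct Hg as [_ [H _]]; exact H|destruct Hv as [_ [H _]]; exact H]. }
  destruct (rc_ball (fun x => g x - v x) x0 (g x0 - v x0)) as [d [Hd Hdd]]; [lra|exact Hrcw|].
  set (x1 := x0 + d / 2).
  assert (Hw1 : 0 < g x1 - v x1).
  { specialize (Hdd x1 ltac:(unfold x1; lra)). apply Rabs_def2 in Hdd. lra. }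
  set (C1 := (g x1 - v x1) * exp (- ln x1 / s)).
  assert (HC1 : 0 < C1) by (apply Rmult_lt_0_compat; [lra|apply exp_pos]).
  assert (Hg1 : 0 < g x1) by (destruct Hg as [H _]; apply H; unfold x1; lra).
  set (F := (1 + g x1) * exp (- ln x1 / s)).
  assert (HF : 0 < F) by (apply Rmult_lt_0_compat; [lra|apply exp_pos]).
  exists C1, (F + C1). split; [exact HC1|]. split; [lra|].
  exists x1. intros x Hx.
  assert (HR := Rpow_pos s x).
  split.
  - assert (H2 := L2 s P x0 g v Hs Hx0 HP Hg Hv Hle x1 x ltac:(unfold x1; lra) Hx).
    fold C1 in H2.
    apply Rmult_le_compat_r with (r := Rpower x (1 / s)) in H2; [|lra].
    rewrite Rmult_assoc, EmulR, Rmult_1_r in H2.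
    assert (0 < v x) by (destruct Hv as [H _]; apply H; unfold x1 in Hx; lra). lra.
  - assert (H1 := L1' s P x0 g Hs Hx0 HP Hg x1 x ltac:(unfold x1; lra) Hx). fold F in H1.
    assert (0 < C1 * Rpower x (1 / s)) by (apply Rmult_lt_0_compat; lra). nra.
Qed.

Lemma P_le_L P x0 L : Pinc P -> 0 < x0 -> is_lim P p_infty (Finite L) -> forall Y, x0 <= Y -> P Y <= L.
Proof.
  intros Hinc Hx0 Hl Y HY.
  destruct (Rle_or_lt (P Y) L) as [H|H]; [exact H|exfalso].
  apply is_lim_spec in Hl. assert (He : 0 < P Y - L) by lra.
  destruct (Hl (mkposreal _ He)) as [M HM]. simpl in HM.
  set (z := Rmax (M + 1) (Y + 1)).
  assert (Hz1 : M + 1 <= z) by apply Rmax_l. assert (Hz2 : Y + 1 <= z) by apply Rmax_r.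
  specialize (HM z ltac:(lra)). apply Rabs_def2 in HM.
  assert (P Y < P z) by (apply Hinc; lra). lra.
Qed.

Theorem corollary1 (s x0 : R) (P : R -> R) (gstar : R -> R) :
  0 < s -> 0 < x0 ->
  C2_on_nonneg P ->
  (forall x y, 0 <= x -> x < y -> P x < P y) ->
  P 0 = 0 ->
  (forall x, 0 < x -> 0 < P x) ->
  ex_RInt_gen (fun z => P z * Rpower z (-1 - 2 / s)) (at_point x0) (Rbar_locally p_infty) ->
  (* gstar is the separatrix: the smallest global solution *)
  global_solution s P x0 gstar ->
  (forall g, global_solution s P x0 g -> gstar x0 <= g x0) ->
  (forall g, global_solution s P x0 g -> gstar x0 < g x0 ->
     exists C1 C2, 0 < C1 /\ C1 < C2 /\
       exists X, forall x, X <= x ->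
         C1 * Rpower x (1 / s) <= g x /\ g x <= C2 * Rpower x (1 / s)) /\
  (exists C, 0 < C /\ forall x, x0 <= x ->
     gamma_c P x < gstar x /\
     Rbar_le (Finite (gstar x)) (Lim (gamma_c P) p_infty) /\
     gstar x <= C * Rpower x (1 / s)) /\
  ((exists L : R, is_lim P p_infty (Finite L)) ->
     (exists M, forall x, x0 <= x -> Rabs (gstar x) <= M) /\
     (forall g, global_solution s P x0 g ->
        (exists M, forall x, x0 <= x -> Rabs (g x) <= M) ->
        forall x, x0 <= x -> g x = gstar x)).
Proof.
  intros Hs Hx0 HC2 Hinc HP0 HP _ Hv Hmin.
  assert (Hinc' : Pinc P) by exact Hinc.
  assert (HPmono : forall a b, x0 <= a -> a <= b -> P a <= P b).
  { intros a b Ha Hab. destruct (Req_dec a b) as [->|Hne]; [lra|left; apply Hinc; lra]. }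
  assert (Hvpos : forall x, x0 <= x -> 0 < gstar x) by (destruct Hv as [H _]; exact H).
  assert (HP1 := part1 s P x0 gstar Hs Hx0 Hinc' HP Hv).
  assert (HL6 := L6 s P x0 gstar Hs Hx0 HC2 Hinc' HP Hv Hmin).
  split; [exact HP1|]. split.
  - destruct Hv as [Hvp [Hvrc Hvder]].
    destruct (rc_ball gstar x0 1) as [d [Hd Hdd]]; [lra|exact Hvrc|].
    set (x1 := x0 + d / 2).
    set (Ca := (gstar x0 + 1) / Rpower x0 (1 / s)).
    set (Cb := (1 + gstar x1) * exp (- ln x1 / s)).
    assert (Hv0 : 0 < gstar x0) by (apply Hvp; lra).
    assert (Hv1 : 0 < gstar x1) by (apply Hvp; unfold x1; lra).
    assert (HCa : 0 < Ca) by (apply Rdiv_lt_0_compat; [lra|apply Rpow_pos]).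
    assert (HCb : 0 < Cb) by (apply Rmult_lt_0_compat; [lra|apply exp_pos]).
    exists (Rmax Ca Cb). split; [eapply Rlt_le_trans; [exact HCa|apply Rmax_l]|].
    intros x Hx. split; [|split].
    + unfold gamma_c. apply gc_lt.
      * left; apply Hvp; exact Hx.
      * left; apply HP; lra.
      * assert (H := L5 s P x0 gstar Hs Hx0 HC2 Hinc' HP (conj Hvp (conj Hvrc Hvder)) x Hx). exact H.
    + destruct (HL6 x Hx) as [Y [HY HYv]].
      assert (HgY : gstar x <= gamma_c P Y) by (unfold gamma_c; apply gc_ge; [left; apply Hvp; exact Hx|exact HYv]).
      unfold Lim. simpl Rbar_loc_seq.
      rewrite <- (Lim_seq_const (gstar x)).
      apply Lim_seq_le_loc.
      destruct (INR_unbounded Y) as [N HN].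
      exists N. intros n Hn.
      assert (HnY : Y <= INR n) by (assert (INR N <= INR n) by (apply le_INR; exact Hn); lra).
      eapply Rle_trans; [exact HgY|]. unfold gamma_c. apply gc_mono. apply HPmono; lra.
    + assert (HRx := Rpow_pos s x).
      destruct (Rlt_or_le x x1) as [Hxl|Hxl].
      * assert (Hvx : gstar x < gstar x0 + 1).
        { destruct (Req_dec x x0) as [->|Hne]; [lra|].
          specialize (Hdd x ltac:(unfold x1 in Hxl; lra)). apply Rabs_def2 in Hdd. lra. }
        assert (HR0 := Rpow_pos s x0).
        assert (HRm := Rpow_mono s x0 x Hs Hx0 Hx).
        assert (gstar x0 + 1 = Ca * Rpower x0 (1 / s)) by (unfold Ca; field; lra).
        assert (Ca * Rpower x0 (1 / s) <= Ca * Rpower x (1 / s)) by (apply Rmult_le_compat_l; lra).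
        assert (Ca * Rpower x (1 / s) <= Rmax Ca Cb * Rpower x (1 / s)) by (apply Rmult_le_compat_r; [lra|apply Rmax_l]).
        lra.
      * assert (H1 := L1' s P x0 gstar Hs Hx0 HP (conj Hvp (conj Hvrc Hvder)) x1 x ltac:(unfold x1; lra) Hxl).
        fold Cb in H1.
        assert (Cb * Rpower x (1 / s) <= Rmax Ca Cb * Rpower x (1 / s)) by (apply Rmult_le_compat_r; [lra|apply Rmax_r]).
        lra.
  - intros [L HL]. split.
    + exists L. intros x Hx. destruct (HL6 x Hx) as [Y [HY HYv]].
      assert (HPY := P_le_L P x0 L Hinc' Hx0 HL Y HY).
      assert (Hvx := Hvpos x Hx). rewrite Rabs_right by lra. nra.
    + intros g Hg [M HM] x Hx.
      assert (Hm := Hmin g Hg).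
      assert (Heq0 : g x0 = gstar x0).
      { destruct (Req_dec (g x0) (gstar x0)) as [H|Hne]; [exact H|exfalso].
        destruct (HP1 g Hg ltac:(lra)) as [C1 [C2 [HC1 [_ [X HX]]]]].
        assert (HM0 : 0 <= M) by (eapply Rle_trans; [apply Rabs_pos|apply (HM x0); lra]).
        set (z := Rmax X (Rmax x0 (exp (s * (M / C1 + 1))))).
        assert (Hz1 : X <= z) by apply Rmax_l.
        assert (Hz2 : x0 <= z) by (eapply Rle_trans; [apply Rmax_l|apply Rmax_r]).
        assert (Hz3 : exp (s * (M / C1 + 1)) <= z) by (eapply Rle_trans; [apply Rmax_r|apply Rmax_r]).
        destruct (HX z Hz1) as [Hlow _].
        assert (Hlnz : s * (M / C1 + 1) <= ln z).
        { rewrite <- (ln_exp (s * (M / C1 + 1))) at 1. apply ln_le_; [apply exp_pos|exact Hz3]. }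
        assert (HRz : exp (M / C1 + 1) <= Rpower z (1 / s)).
        { unfold Rpower. apply exp_le_.
          replace (M / C1 + 1) with (1 / s * (s * (M / C1 + 1))) by (field; lra).
          apply Rmult_le_compat_l; [left; apply Rdiv_lt_0_compat; lra|exact Hlnz]. }
        assert (Hexp := exp_ineq1_le (M / C1 + 1)).
        assert (HMC : M < C1 * Rpower z (1 / s)).
        { assert (Ha1 : M / C1 + 1 < Rpower z (1 / s)) by lra.
          assert (Ha2 : C1 * (M / C1 + 1) < C1 * Rpower z (1 / s)) by (apply Rmult_lt_compat_l; lra).
          replace (C1 * (M / C1 + 1)) with (M + C1) in Ha2 by (field; lra). lra. }
        assert (Hgz := HM z Hz2). assert (g z <= Rabs (g z)) by apply Rle_abs. lra. }
      apply Rle_antisym.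
      * apply (L3 s P x0 g gstar Hs Hx0 Hinc' HP Hg Hv); [lra|exact Hx].
      * apply (L3 s P x0 gstar g Hs Hx0 Hinc' HP Hv Hg); [lra|exact Hx].
Qed.
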